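(* Let $\mathcal R=(\Delta^*,\Theta)$ be a word rewriting system with $\Delta=\{0,1\}$, let $\Sigma_{\mathcal R}=\Sigma_\Theta\cup\Sigma_{LR}$ be the set of tgds over schema $\{E,L,R\}$ defined below, and let $w_0\in\Delta^*$. Then the core chase sequence with $\Sigma_{\mathcal R}$ starting from $I_{w_0}$ is infinite if and only if there is an infinite derivation $w_0\rightarrow_{\mathcal R}w_1\rightarrow_{\mathcal R}w_2\rightarrow_{\mathcal R}\cdots$.
   Context: Word rewriting: $\Theta$ is a finite subset of $\Delta^*\times\Delta^*$; $u\rightarrow_{\mathcal R}v$ iff $u=x\ell y$, $v=xry$ for some $(\ell,r)\in\Theta$ and $x,y\in\Delta^*$. For $w=a_1\dots a_n\in\Delta^*$, $I_w=\{E(x_0,a_1,x_1),\dots,E(x_{n-1},a_n,x_n)\}$ with pairwise distinct nulls $x_i$. Schema: $E$ ternary, $L,R$ binary; $0,1$ are constants. $\Sigma_\Theta$ contains, for each $\rho=(a_1\dots a_n,b_1\dots b_m)\in\Theta$, the tgd $E(x_0,a_1,x_1),\dots,E(x_{n-1},a_n,x_n)\rightarrow\exists y_0\dots y_m\,L(x_0,y_0),E(y_0,b_1,y_1),\dots,E(y_{m-1},b_m,y_m),R(x_n,y_m)$. $\Sigma_{LR}$ consists of, for $c\in\{0,1\}$: $E(x_0,c,x_1),L(x_1,y_1)\rightarrow\exists y_0\,L(x_0,y_0),E(y_0,c,y_1)$ and $R(x_0,z_0),E(x_0,c,x_1)\rightarrow\exists z_1\,E(z_0,c,z_1),R(x_1,z_1)$.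 Chase: a trigger for tgd $\alpha\rightarrow\exists\bar z\beta$ on instance $I$ is a mapping $h$ (identity on constants) with $h(\alpha)\subseteq I$, active if no extension $h'$ has $h'(\beta)\subseteq I$. The core chase from $I$ repeatedly fires all active triggers in parallel (each adding $h'(\beta)$ with fresh nulls for existential variables), takes the union and replaces it by its core (minimal subinstance to which the instance maps by an endomorphism); it stops when no active trigger remains. *)

(* Defs.v *)
From Stdlib Require Import List Arith.
Import ListNotations.

(** * Words and word rewriting over Delta = {0,1} (encoded as bool: false = 0, true = 1) *)

Definition word := list bool.
Definition rws := list (word * word).

Definition rstep (Theta : rws) (u v : word) : Prop :=
  exists x y l r, In (l, r) Theta /\ u = x ++ l ++ y /\ v = x ++ r ++ y.

Definition infinite_derivation (Theta : rws) (w0 : word) : Prop :=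
  exists f : nat -> word, f 0 = w0 /\ forall n, rstep Theta (f n) (f (S n)).

Inductive term : Type :=
| Const (b : bool)
| Null (n : nat).

Inductive vterm : Type :=
| VC (b : bool)
| VV (n : nat).

Inductive atom (T : Type) : Type :=
| AE (t1 t2 t3 : T)
| AL (t1 t2 : T)
| AR (t1 t2 : T).
Arguments AE {T}. Arguments AL {T}. Arguments AR {T}.

Definition amap {T U : Type} (f : T -> U) (a : atom T) : atom U :=
  match a with
  | AE t1 t2 t3 => AE (f t1) (f t2) (f t3)
  | AL t1 t2 => AL (f t1) (f t2)
  | AR t1 t2 => AR (f t1) (f t2)
  end.

Definition atom_args {T : Type} (a : atom T) : list T :=
  match a with
  | AE t1 t2 t3 => [t1; t2; t3]
  | AL t1 t2 => [t1; t2]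
  | AR t1 t2 => [t1; t2]
  end.

(** An instance is a finite set of atoms, represented by a list
    (order and duplicates are irrelevant: only membership is used). *)
Definition instance := list (atom term).

Definition occurs (t : term) (I : instance) : Prop :=
  exists a, In a I /\ In t (atom_args a).

(** I_w for w = a_1 ... a_n : E(x_0,a_1,x_1), ..., E(x_{n-1},a_n,x_n), x_i = Null i. *)
Fixpoint I_word_from (k : nat) (w : word) : instance :=
  match w with
  | [] => []
  | a :: w' => AE (Null k) (Const a) (Null (S k)) :: I_word_from (S k) w'
  end.
Definition I_word (w : word) : instance := I_word_from 0 w.

(** A tgd body -> exists zbar. head; universal variables are those of the body,
    existential variables are the variables of the head not occurring in the body. *)
Definition tgd := (list (atom vterm) * list (atom vterm))%type.
Definition body (s : tgd) := fst s.
Definition head (s : tgd) := snd s.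

Definition vvars (t : vterm) : list nat :=
  match t with VC _ => [] | VV n => [n] end.
Definition atoms_vars (l : list (atom vterm)) : list nat :=
  flat_map (fun a => flat_map vvars (atom_args a)) l.
Definition body_vars (s : tgd) := atoms_vars (body s).
Definition is_evar (s : tgd) (x : nat) : Prop :=
  In x (atoms_vars (head s)) /\ ~ In x (body_vars s).

Definition vsub (h : nat -> term) (t : vterm) : term :=
  match t with VC b => Const b | VV n => h n end.
Definition asub (h : nat -> term) (a : atom vterm) : atom term := amap (vsub h) a.

Definition agree_on (xs : list nat) (h h' : nat -> term) : Prop :=
  forall x, In x xs -> h x = h' x.

Definition trigger (Sigma : list tgd) (I : instance) (s : tgd) (h : nat -> term) : Prop :=
  In s Sigma /\ forall a, In a (body s) -> In (asub h a) I.

Definition active (I : instance) (s : tgd) (h : nat -> term) : Prop :=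
  ~ exists h', agree_on (body_vars s) h h' /\ forall a, In a (head s) -> In (asub h' a) I.

Definition dflt_trig : tgd * (nat -> term) := (([], []), fun _ => Null 0).

(** Parallel firing of all active triggers: J is the union of I with h'(head)
    for one representative of every active trigger, where existential variables
    are sent to pairwise distinct fresh nulls. *)
Definition par_step (Sigma : list tgd) (I J : instance) : Prop :=
  exists ts : list (tgd * (nat -> term)),
    let s_ i := fst (nth i ts dflt_trig) in
    let h_ i := snd (nth i ts dflt_trig) in
    (forall p, In p ts -> trigger Sigma I (fst p) (snd p) /\ active I (fst p) (snd p)) /\
    (forall s h, trigger Sigma I s h -> active I s h ->
       exists h', In (s, h') ts /\ agree_on (body_vars s) h h') /\
    (forall i j, i < length ts -> j < length ts -> s_ i = s_ j ->
       agree_on (body_vars (s_ i)) (h_ i) (h_ j) -> i = j) /\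
    (forall i x, i < length ts -> is_evar (s_ i) x ->
       exists n, h_ i x = Null n /\ ~ occurs (Null n) I) /\
    (forall i j x y, i < length ts -> j < length ts ->
       is_evar (s_ i) x -> is_evar (s_ j) y -> h_ i x = h_ j y -> i = j /\ x = y) /\
    J = I ++ flat_map (fun p => map (asub (snd p)) (head (fst p))) ts.

Definition subinstance (K J : instance) : Prop := incl K J.

Definition hom_into (h : term -> term) (J K : instance) : Prop :=
  (forall b, h (Const b) = Const b) /\ forall a, In a J -> In (amap h a) K.

Definition retracts_to (J K : instance) : Prop :=
  subinstance K J /\ exists h, hom_into h J K.

Definition is_core_of (K J : instance) : Prop :=
  retracts_to J K /\ forall K', subinstance K' K -> retracts_to J K' -> incl K K'.

Definition has_active_trigger (Sigma : list tgd) (I : instance) : Prop :=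
  exists s h, trigger Sigma I s h /\ active I s h.

Definition core_chase_step (Sigma : list tgd) (I K : instance) : Prop :=
  has_active_trigger Sigma I /\ exists J, par_step Sigma I J /\ is_core_of K J.

Definition core_chase_infinite (Sigma : list tgd) (I0 : instance) : Prop :=
  exists f : nat -> instance, f 0 = I0 /\ forall n, core_chase_step Sigma (f n) (f (S n)).

(** For a rule (a_1..a_n, b_1..b_m): x_i = VV i (0 <= i <= n), y_j = VV (n+1+j). *)
Fixpoint path_atoms (start : nat) (w : word) : list (atom vterm) :=
  match w with
  | [] => []
  | a :: w' => AE (VV start) (VC a) (VV (S start)) :: path_atoms (S start) w'
  end.

Definition rule_tgd (rho : word * word) : tgd :=
  let (l, r) := rho in
  let n := length l in
  let m := length r in
  (path_atoms 0 l,
   AL (VV 0) (VV (S n)) :: path_atoms (S n) r ++ [AR (VV n) (VV (S n + m))]).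

Definition Sigma_Theta (Theta : rws) : list tgd := map rule_tgd Theta.

(** E(x0,c,x1), L(x1,y1) -> exists y0. L(x0,y0), E(y0,c,y1)
    with x0 = 0, x1 = 1, y1 = 2, y0 = 3. *)
Definition tgd_L (c : bool) : tgd :=
  ([AE (VV 0) (VC c) (VV 1); AL (VV 1) (VV 2)],
   [AL (VV 0) (VV 3); AE (VV 3) (VC c) (VV 2)]).

(** R(x0,z0), E(x0,c,x1) -> exists z1. E(z0,c,z1), R(x1,z1)
    with x0 = 0, z0 = 1, x1 = 2, z1 = 3. *)
Definition tgd_R (c : bool) : tgd :=
  ([AR (VV 0) (VV 1); AE (VV 0) (VC c) (VV 2)],
   [AE (VV 1) (VC c) (VV 3); AR (VV 2) (VV 3)]).

Definition Sigma_LR : list tgd := [tgd_L false; tgd_L true; tgd_R false; tgd_R true].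

Definition Sigma_R (Theta : rws) : list tgd := Sigma_Theta Theta ++ Sigma_LR.

(* Main.v *)
From Stdlib Require Import List Arith Lia Classical ClassicalEpsilon Cantor.
Require Import Defs.
Import ListNotations.


Definition term_eq_dec : forall t u : term, {t = u} + {t <> u}.
Proof. decide equality; [apply Bool.bool_dec | apply Nat.eq_dec]. Defined.
Definition vterm_eq_dec : forall t u : vterm, {t = u} + {t <> u}.
Proof. decide equality; [apply Bool.bool_dec | apply Nat.eq_dec]. Defined.
Definition atom_eq_dec {T} (d : forall t u : T, {t = u} + {t <> u}) :
  forall a b : atom T, {a = b} + {a <> b}.
Proof. decide equality. Defined.

Definition avars (a : atom vterm) : list nat := flat_map vvars (atom_args a).

Definition model (Sigma : list tgd) (U : instance) : Prop :=
  forall s h, trigger Sigma U s h ->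
    exists h', agree_on (body_vars s) h h' /\ forall a, In a (Defs.head s) -> In (asub h' a) U.

Lemma amap_comp {A B C} (f : A -> B) (g : B -> C) a :
  amap g (amap f a) = amap (fun x => g (f x)) a.
Proof. destruct a; reflexivity. Qed.

Lemma amap_id {A} (a : atom A) : amap (fun x => x) a = a.
Proof. destruct a; reflexivity. Qed.

Lemma amap_asub (g : term -> term) h a :
  (forall b, g (Const b) = Const b) ->
  amap g (asub h a) = asub (fun x => g (h x)) a.
Proof.
  intros Hc. unfold asub. rewrite amap_comp. destruct a; simpl;
  repeat match goal with t : vterm |- _ => destruct t end; simpl; rewrite ?Hc; reflexivity.
Qed.

Lemma asub_ext h h' a : (forall x, In x (avars a) -> h x = h' x) -> asub h a = asub h' a.
Proof.
  unfold avars, asub; intros H; destruct a; simpl in *;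
  repeat match goal with t : vterm |- _ => destruct t end; simpl in *;
  repeat rewrite H by (repeat rewrite in_app_iff; simpl; tauto); reflexivity.
Qed.

Lemma avars_args h a x : In x (avars a) -> In (h x) (atom_args (asub h a)).
Proof.
  unfold avars, asub; destruct a; simpl;
  repeat match goal with t : vterm |- _ => destruct t end; simpl; intuition congruence.
Qed.

Lemma body_vars_in s x : In x (body_vars s) -> exists a, In a (body s) /\ In x (avars a).
Proof. unfold body_vars, atoms_vars. intros H. apply in_flat_map in H. exact H. Qed.

Lemma head_vars_in s a x : In a (Defs.head s) -> In x (avars a) -> In x (atoms_vars (Defs.head s)).
Proof. intros. unfold atoms_vars. apply in_flat_map. eauto. Qed.

Lemma trigger_occurs Sigma I s h x :
  trigger Sigma I s h -> In x (body_vars s) -> occurs (h x) I.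
Proof.
  intros [_ Hb] Hx. apply body_vars_in in Hx as [a [Ha Hx]].
  exists (asub h a). split; auto. apply avars_args; auto.
Qed.

Lemma hom_comp g g' I J K : hom_into g I J -> hom_into g' J K ->
  hom_into (fun t => g' (g t)) I K.
Proof.
  intros [Hc Ha] [Hc' Ha']. split.
  - intros b. rewrite Hc, Hc'. auto.
  - intros a Hin. rewrite <- amap_comp. apply Ha'. apply Ha. auto.
Qed.

Lemma hom_incl g I I' K : incl I I' -> hom_into g I' K -> hom_into g I K.
Proof. intros Hi [Hc Ha]. split; auto. Qed.

Lemma hom_id I K : incl I K -> hom_into (fun t => t) I K.
Proof. intros Hi. split; auto. intros a Ha. rewrite amap_id. auto. Qed.

Lemma trigger_hom Sigma I K s h g : trigger Sigma I s h -> hom_into g I K ->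
  trigger Sigma K s (fun x => g (h x)).
Proof.
  intros [Hs Hb] [Hc Ha]. split; auto. intros a Hin.
  rewrite <- amap_asub by auto. apply Ha. auto.
Qed.

Lemma occurs_hom g I K t : hom_into g I K -> occurs t I -> occurs (g t) K.
Proof.
  intros [Hc Ha] [a [Hin Ht]]. exists (amap g a). split; auto.
  destruct a; simpl in *; intuition congruence.
Qed.

Lemma par_step_incl Sigma I J : par_step Sigma I J -> incl I J.
Proof.
  intros [ts [_ [_ [_ [_ [_ HJ]]]]]]. subst J. intros a Ha. apply in_app_iff; auto.
Qed.

Lemma par_step_sat Sigma I J s h : par_step Sigma I J -> trigger Sigma I s h ->
  exists k, agree_on (body_vars s) h k /\ forall a, In a (Defs.head s) -> In (asub k a) J.
Proof.
  intros HP Ht. destruct (classic (active I s h)) as [Hact | Hna].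
  - destruct HP as [ts [_ [H2 [_ [_ [_ HJ]]]]]].
    destruct (H2 s h Ht Hact) as [k [Hin Hag]]. exists k. split; auto.
    intros a Ha. subst J. apply in_app_iff. right. apply in_flat_map.
    exists (s, k). split; auto. simpl. apply in_map. auto.
  - unfold active in Hna. apply NNPP in Hna. destruct Hna as [k [Hag Hh]].
    exists k. split; auto. intros a Ha. apply (par_step_incl _ _ _ HP). auto.
Qed.

Lemma step_hom Sigma I K : core_chase_step Sigma I K -> exists r, hom_into r I K.
Proof.
  intros [_ [J [HP [[Hsub [r Hr]] _]]]]. exists r.
  eapply hom_incl; [apply (par_step_incl _ _ _ HP) | exact Hr].
Qed.


Lemma evar_not_body s x : is_evar s x -> ~ In x (body_vars s).
Proof. intros [_ H]; exact H. Qed.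

Lemma head_var_cases s a x : In a (Defs.head s) -> In x (avars a) ->
  In x (body_vars s) \/ is_evar s x.
Proof.
  intros Ha Hx. destruct (classic (In x (body_vars s))); auto.
  right. split; auto. eapply head_vars_in; eauto.
Qed.

Definition ch {A : Type} {P : A -> Prop} (H : exists x, P x) : A :=
  proj1_sig (constructive_indefinite_description _ H).
Lemma ch_spec {A : Type} {P : A -> Prop} (H : exists x, P x) : P (ch H).
Proof. unfold ch. destruct (constructive_indefinite_description _ H); auto. Qed.

Definition ext {A R : Type} (P : term -> A -> Prop) (F : A -> R) (g : term -> R) (u : term) : R :=
  match excluded_middle_informative (exists p, P u p) with
  | left H => F (ch H)
  | right _ => g u
  end.

Lemma amap_ext_args (g g' : term -> term) A : (forall u, In u (atom_args A) -> g u = g' u) ->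
  amap g A = amap g' A.
Proof. intros H; destruct A; simpl in *; rewrite ?H by tauto; reflexivity. Qed.

Lemma ext_out {A R} P (F : A -> R) g u : ~ (exists p : A, P u p) -> ext P F g u = g u.
Proof. intros H. unfold ext. destruct (excluded_middle_informative _); tauto. Qed.

Lemma ext_in {A R} (P : term -> A -> Prop) (F : A -> R) g u p :
  (forall p', P u p -> P u p' -> p = p') -> P u p -> ext P F g u = F p.
Proof.
  intros Hu Hp. unfold ext. destruct (excluded_middle_informative _) as [H|H].
  - f_equal. symmetry. apply Hu; auto. apply ch_spec.
  - exfalso; eauto.
Qed.

Definition tS (ts : list (tgd * (nat -> term))) i := fst (nth i ts dflt_trig).
Definition tH (ts : list (tgd * (nat -> term))) i := snd (nth i ts dflt_trig).

Lemma par_step_e Sigma I J : par_step Sigma I J -> exists ts,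
    (forall p, In p ts -> trigger Sigma I (fst p) (snd p) /\ active I (fst p) (snd p)) /\
    (forall s h, trigger Sigma I s h -> active I s h ->
       exists h', In (s, h') ts /\ agree_on (body_vars s) h h') /\
    (forall i j, i < length ts -> j < length ts -> tS ts i = tS ts j ->
       agree_on (body_vars (tS ts i)) (tH ts i) (tH ts j) -> i = j) /\
    (forall i x, i < length ts -> is_evar (tS ts i) x ->
       exists n, tH ts i x = Null n /\ ~ occurs (Null n) I) /\
    (forall i j x y, i < length ts -> j < length ts ->
       is_evar (tS ts i) x -> is_evar (tS ts j) y -> tH ts i x = tH ts j y -> i = j /\ x = y) /\
    J = I ++ flat_map (fun p => map (asub (snd p)) (Defs.head (fst p))) ts.
Proof. intros H. exact H. Qed.

Lemma down_step Sigma I J U a :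
  model Sigma U -> hom_into a I U -> par_step Sigma I J -> exists a', hom_into a' J U.
Proof.
  intros HU Ha HP. apply par_step_e in HP. destruct HP as [ts [H1 [H2 [H3 [H4 [H5 HJ]]]]]].
  set (s_ := tS ts) in *. set (h_ := tH ts) in *.
  assert (Htr : forall i, i < length ts -> trigger Sigma I (s_ i) (h_ i) /\ active I (s_ i) (h_ i)).
  { intros i Hi. unfold s_, h_. apply H1. apply nth_In; auto. }
  set (Kf := fun i => epsilon (inhabits (fun _ : nat => Null 0))
     (fun k => agree_on (body_vars (s_ i)) (fun x => a (h_ i x)) k /\
               forall b, In b (Defs.head (s_ i)) -> In (asub k b) U)).
  assert (HK : forall i, i < length ts ->
     agree_on (body_vars (s_ i)) (fun x => a (h_ i x)) (Kf i) /\
     forall b, In b (Defs.head (s_ i)) -> In (asub (Kf i) b) U).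
  { intros i Hi. unfold Kf. apply epsilon_spec. apply HU.
    eapply trigger_hom; eauto. apply Htr; auto. }
  set (P := fun u (p : nat * nat) => fst p < length ts /\ is_evar (s_ (fst p)) (snd p) /\ h_ (fst p) (snd p) = u).
  assert (Puniq : forall u p p', P u p -> P u p' -> p = p').
  { intros u [i x] [j y] [Hi [Hx Hu]] [Hj [Hy Hu']]. simpl in *.
    destruct (H5 i j x y) as [E1 E2]; try congruence; auto. }
  exists (ext P (fun p => Kf (fst p) (snd p)) a).
  assert (Hfr : forall u, occurs u I -> ~ exists p, P u p).
  { intros u Hu [[i x] [Hi [Hx Heq]]]. simpl in *. destruct (H4 i x Hi Hx) as [n [Hn Hno]].
    apply Hno. rewrite <- Hn, Heq. auto. }
  destruct Ha as [Hac Haa]. split.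
  - intros b. rewrite ext_out; auto. intros [[i x] [Hi [Hx Heq]]]. simpl in *.
    destruct (H4 i x Hi Hx) as [n [Hn _]]. congruence.
  - intros A HA. subst J. apply in_app_iff in HA as [HA | HA].
    + replace (amap (ext P (fun p => Kf (fst p) (snd p)) a) A) with (amap a A). auto.
      apply amap_ext_args. intros u Hu. rewrite ext_out; auto. apply Hfr. exists A; auto.
    + apply in_flat_map in HA as [p [Hp HA]]. apply In_nth with (d := dflt_trig) in Hp as [i [Hi Hpi]].
      subst p. change (fst (nth i ts dflt_trig)) with (s_ i) in HA. change (snd (nth i ts dflt_trig)) with (h_ i) in HA. apply in_map_iff in HA as [b [<- Hb]].
      rewrite amap_asub.
      2:{ intros c. rewrite ext_out; auto. intros [[j x] [Hj [Hx Heq]]]. simpl in *.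
          destruct (H4 j x Hj Hx) as [n [Hn _]]. congruence. }
      replace (asub (fun x => ext P (fun p => Kf (fst p) (snd p)) a (h_ i x)) b) with (asub (Kf i) b).
      { apply (HK i Hi). auto. }
      apply asub_ext. intros x Hx. destruct (head_var_cases _ _ _ Hb Hx) as [Hbv | Hev].
      * rewrite ext_out. { symmetry. apply (HK i Hi). auto. }
        apply Hfr. eapply trigger_occurs; eauto. apply Htr; auto.
      * rewrite (ext_in P _ _ (h_ i x) (i, x)); auto.
        { intros; eapply Puniq; eauto. }
        unfold P; simpl; auto.
Qed.

Lemma chase_down Sigma f U a0 :
  model Sigma U -> hom_into a0 (f 0) U ->
  (forall n, core_chase_step Sigma (f n) (f (S n))) ->
  forall n, exists a, hom_into a (f n) U.
Proof.
  intros HU H0 Hst n. induction n as [|n [a Ha]]; eauto.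
  destruct (Hst n) as [_ [J [HP [[Hsub _] _]]]].
  destruct (down_step _ _ _ _ _ HU Ha HP) as [a' Ha'].
  exists a'. eapply hom_incl; eauto.
Qed.


Definition Ule {T : Type} (U0 : instance) (tk : list T) (lv : T -> nat) (ss : T -> tgd)
  (hh : T -> nat -> term) (L : nat) : instance :=
  U0 ++ flat_map (fun t => map (asub (hh t)) (Defs.head (ss t))) (filter (fun t => lv t <=? L) tk).

Definition tk_ok {T : Type} Sigma U0 (tk : list T) lv ss hh : Prop :=
  (forall t, In t tk -> In (ss t) Sigma /\ 1 <= lv t /\
       forall a, In a (body (ss t)) -> In (asub (hh t) a) (Ule U0 tk lv ss hh (pred (lv t)))) /\
  (forall t x, In t tk -> is_evar (ss t) x ->
       (exists n, hh t x = Null n) /\ ~ occurs (hh t x) (Ule U0 tk lv ss hh (pred (lv t)))) /\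
  (forall t t' x y, In t tk -> In t' tk -> is_evar (ss t) x -> is_evar (ss t') y ->
       hh t x = hh t' y -> t = t' /\ x = y).

Lemma Ule_split {T : Type} U0 (tk : list T) lv ss hh L A :
  In A (Ule U0 tk lv ss hh (S L)) -> In A (Ule U0 tk lv ss hh L) \/
  exists t b, In t tk /\ lv t = S L /\ In b (Defs.head (ss t)) /\ A = asub (hh t) b.
Proof.
  unfold Ule. rewrite !in_app_iff. intros [H|H]; auto.
  apply in_flat_map in H as [t [Ht HA]]. apply filter_In in Ht as [Ht Hl].
  apply Nat.leb_le in Hl. apply in_map_iff in HA as [b [<- Hb]].
  destruct (Nat.eq_dec (lv t) (S L)).
  - right. exists t, b. auto.
  - left. right. apply in_flat_map. exists t. split.
    + apply filter_In. split; auto. apply Nat.leb_le. lia.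
    + apply in_map. auto.
Qed.

Lemma Ule_base {T : Type} U0 (tk : list T) lv ss hh :
  (forall t, In t tk -> 1 <= lv t) -> incl (Ule U0 tk lv ss hh 0) U0.
Proof.
  intros Hl A. unfold Ule. rewrite in_app_iff. intros [H|H]; auto.
  apply in_flat_map in H as [t [Ht _]]. apply filter_In in Ht as [Ht Hle].
  apply Nat.leb_le in Hle. specialize (Hl t Ht). lia.
Qed.

Lemma chase_up {T : Type} Sigma U0 (tk : list T) lv ss hh f c0 :
  tk_ok Sigma U0 tk lv ss hh ->
  (forall n, core_chase_step Sigma (f n) (f (S n))) ->
  hom_into c0 U0 (f 0) ->
  forall L, exists g, hom_into g (Ule U0 tk lv ss hh L) (f L).
Proof.
  intros [Hb [Hev Huq]] Hst H0 L. induction L as [|L [g Hg]].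
  { exists c0. eapply hom_incl; eauto. apply Ule_base. intros t Ht; apply Hb; auto. }
  destruct (Hst L) as [_ [J [HP [[Hsub [r Hr]] _]]]].
  set (UL := Ule U0 tk lv ss hh L) in *.
  set (Kt := fun t => epsilon (inhabits (fun _ : nat => Null 0))
     (fun k => agree_on (body_vars (ss t)) (fun x => g (hh t x)) k /\
               forall b, In b (Defs.head (ss t)) -> In (asub k b) J)).
  assert (HK : forall t, In t tk -> lv t = S L ->
     agree_on (body_vars (ss t)) (fun x => g (hh t x)) (Kt t) /\
     forall b, In b (Defs.head (ss t)) -> In (asub (Kt t) b) J).
  { intros t Ht Hl. unfold Kt. apply epsilon_spec.
    apply (par_step_sat _ _ _ _ _ HP). eapply trigger_hom; [|exact Hg].
    destruct (Hb t Ht) as [Hs [_ Hbo]]. split; auto. intros a Ha.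
    specialize (Hbo a Ha). rewrite Hl in Hbo. exact Hbo. }
  set (P := fun u (p : T * nat) => In (fst p) tk /\ lv (fst p) = S L /\
              is_evar (ss (fst p)) (snd p) /\ hh (fst p) (snd p) = u).
  assert (Puniq : forall u p p', P u p -> P u p' -> p = p').
  { intros u [t x] [t' y] [Ht [Hl [Hx Hu]]] [Ht' [Hl' [Hy Hu']]]. simpl in *.
    destruct (Huq t t' x y) as [E1 E2]; try congruence; auto. }
  assert (Hfr : forall u, occurs u UL -> ~ exists p, P u p).
  { intros u Hu [[t x] [Ht [Hl [Hx Heq]]]]. simpl in *. destruct (Hev t x Ht Hx) as [_ Hno].
    rewrite Hl in Hno. simpl in Hno. apply Hno. rewrite Heq. auto. }
  assert (Hnc : forall b, ~ exists p, P (Const b) p).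
  { intros b [[t x] [Ht [Hl [Hx Heq]]]]. simpl in *. destruct (Hev t x Ht Hx) as [[n Hn] _].
    congruence. }
  exists (ext P (fun p => r (Kt (fst p) (snd p))) (fun u => r (g u))).
  destruct Hg as [Hgc Hga]. destruct Hr as [Hrc Hra]. split.
  - intros b. rewrite ext_out; auto. rewrite Hgc, Hrc. auto.
  - intros A HA. apply Ule_split in HA as [HA | [t [b [Ht [Hl [Hbh ->]]]]]].
    + rewrite (amap_ext_args _ (fun u => r (g u))).
      * rewrite <- amap_comp. apply Hra. apply (par_step_incl _ _ _ HP). apply Hga. auto.
      * intros u Hu. rewrite ext_out; auto. apply Hfr. exists A; auto.
    + rewrite amap_asub.
      2:{ intros c. rewrite ext_out; auto. rewrite Hgc, Hrc; auto. }
      replace (asub _ b) with (amap r (asub (Kt t) b)).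
      { apply Hra. apply (HK t Ht Hl). auto. }
      rewrite amap_asub by auto.
      apply asub_ext. intros x Hx. destruct (head_var_cases _ _ _ Hbh Hx) as [Hbv | Hevx].
      * rewrite ext_out.
        { f_equal. symmetry. apply (HK t Ht Hl). auto. }
        apply Hfr. apply (trigger_occurs Sigma UL (ss t) (hh t) x); auto.
        destruct (Hb t Ht) as [Hs [_ Hbo]].
        split; auto. intros a Ha. specialize (Hbo a Ha). rewrite Hl in Hbo. exact Hbo.
      * rewrite (ext_in P _ _ (hh t x) (t, x)); auto.
        { intros; eapply Puniq; eauto. }
        unfold P; simpl; auto.
Qed.

Lemma core_endo_surj Sigma I K e :
  core_chase_step Sigma I K -> hom_into e K K -> incl K (map (amap e) K).
Proof.
  intros [_ [J [HP [[Hsub [r Hr]] Hmin]]]] He. apply Hmin.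
  - intros A HA. apply in_map_iff in HA as [A' [<- HA']]. apply He. auto.
  - split.
    + intros A HA. apply in_map_iff in HA as [A' [<- HA']]. apply Hsub. apply He. auto.
    + exists (fun t => e (r t)). eapply hom_comp; [exact Hr|]. split; [apply He|].
      intros A HA. apply in_map. auto.
Qed.

Lemma NoDup_map_inj {A B} (f : A -> B) l x y : NoDup (map f l) -> In x l -> In y l -> f x = f y -> x = y.
Proof.
  induction l as [|a l IH]; simpl; [tauto|]. intros Hn Hx Hy Hf. inversion Hn; subst.
  destruct Hx as [<-|Hx]; destruct Hy as [<-|Hy]; auto.
  - exfalso. apply H1. rewrite Hf. apply in_map. auto.
  - exfalso. apply H1. rewrite <- Hf. apply in_map. auto.
Qed.

Lemma core_inverse Sigma I K e :
  core_chase_step Sigma I K -> hom_into e K K ->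
  exists ei, hom_into ei K K /\ forall t, occurs t K -> ei (e t) = t.
Proof.
  intros Hst He. pose proof (core_endo_surj _ _ _ _ Hst He) as Hs.
  set (T := nodup term_eq_dec (flat_map atom_args K)).
  assert (HT : forall t, In t T <-> occurs t K).
  { intros t. unfold T. rewrite nodup_In, in_flat_map. unfold occurs. tauto. }
  assert (Hmap : forall t, In t T -> In (e t) T).
  { intros t Ht. apply HT in Ht as [A [HA Ht]]. apply HT. exists (amap e A). split.
    - apply He; auto.
    - destruct A; simpl in *; intuition congruence. }
  assert (Hsur : incl T (map e T)).
  { intros t Ht. apply HT in Ht as [A [HA Ht]]. apply Hs in HA.
    apply in_map_iff in HA as [A' [<- HA']]. apply in_map_iff.
    destruct A'; simpl in Ht; intuition (subst; eexists; split; [reflexivity| apply HT; eexists; split; [exact HA'| simpl; tauto]]). }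
  assert (Hnd : NoDup (map e T)).
  { apply NoDup_incl_NoDup with (l := T); auto. apply NoDup_nodup. rewrite length_map. auto. }
  assert (Hinj : forall x y, In x T -> In y T -> e x = e y -> x = y).
  { intros. eapply NoDup_map_inj; eauto. }
  set (P := fun u t => In t T /\ e t = u).
  assert (Hinv : forall t, In t T -> ext P (fun t => t) (fun u => u) (e t) = t).
  { intros t Ht. apply ext_in with (p := t).
    - intros p' [H1 H2] [H3 H4]. apply Hinj; congruence.
    - split; auto. }
  exists (ext P (fun t => t) (fun u => u)). split.
  - split.
    + intros b. destruct (classic (In (Const b) T)) as [Hb|Hb].
      * destruct He as [Hec _]. rewrite <- (Hec b) at 1. apply Hinv. auto.
      * rewrite ext_out; [reflexivity|]. intros [t [Ht Het]]. apply Hb. rewrite <- Het. auto.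
    + intros A HA. apply Hs in HA. apply in_map_iff in HA as [A' [<- HA']].
      rewrite amap_comp. rewrite (amap_ext_args _ (fun x => x)). rewrite amap_id; auto.
      intros u Hu. apply Hinv. apply HT. exists A'. auto.
  - intros t Ht. apply Hinv. apply HT. auto.
Qed.

Lemma no_univ Sigma f U a0 m g :
  model Sigma U -> hom_into a0 (f 0) U ->
  (forall n, core_chase_step Sigma (f n) (f (S n))) ->
  hom_into g U (f m) -> False.
Proof.
  intros HU Ha0 Hst Hg.
  destruct (step_hom _ _ _ (Hst m)) as [r Hr].
  pose proof (hom_comp _ _ _ _ _ Hg Hr) as Hb. set (b := fun t => r (g t)) in Hb.
  destruct (chase_down _ _ _ _ HU Ha0 Hst (S m)) as [a Ha].
  pose proof (hom_comp _ _ _ _ _ Ha Hb) as He.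
  destruct (core_inverse _ _ _ _ (Hst m) He) as [ei [Hei Hinv]].
  destruct (Hst (S m)) as [[s [h [Htr Hact]]] _].
  apply Hact. destruct (HU s (fun x => a (h x))) as [k [Hag Hk]].
  { eapply trigger_hom; eauto. }
  exists (fun x => ei (b (k x))). split.
  - intros x Hx. rewrite <- (Hag x Hx). rewrite Hinv; auto. eapply trigger_occurs; eauto.
  - intros c Hc. pose proof (hom_comp _ _ _ _ _ Hb Hei) as Hbe.
    destruct Hbe as [Hbc Hba]. rewrite <- (amap_asub (fun t => ei (b t))) by (intros; apply Hbc). apply Hba. apply Hk. auto.
Qed.


(** ** Existence of cores *)

Lemma min_nat (Q : nat -> Prop) : (exists n, Q n) -> exists n, Q n /\ forall m, Q m -> n <= m.
Proof.
  intros [n Hn]. induction n as [n IH] using (well_founded_induction lt_wf).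
  destruct (classic (exists m, Q m /\ m < n)) as [[m [Hm Hlt]]|Hno].
  - apply (IH m Hlt Hm).
  - exists n. split; auto. intros m Hm. destruct (Nat.lt_ge_cases m n); auto.
    exfalso. apply Hno. eauto.
Qed.

Lemma core_exists J : exists K, is_core_of K J.
Proof.
  destruct (min_nat (fun n => exists K, retracts_to J K /\ length K = n)) as [n [[K [HK Hl]] Hmin]].
  { exists (length J). exists J. split; auto. split; [intros a; auto|]. exists (fun t => t).
    apply hom_id. intros a; auto. }
  exists K. split; auto. intros K' Hsub [HK'J [h Hh]] a Ha.
  destruct (classic (In a K')) as [|Hna]; auto. exfalso.
  set (K'' := nodup (atom_eq_dec term_eq_dec) K').
  assert (Hlt : length K'' < n).
  { apply Nat.le_lt_trans with (length (remove (atom_eq_dec term_eq_dec) a K)).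
    - apply NoDup_incl_length. apply NoDup_nodup. intros b Hb. unfold K'' in Hb.
      apply nodup_In in Hb. apply in_in_remove; auto. intros ->; auto.
    - subst n. apply remove_length_lt. auto. }
  assert (Hr : retracts_to J K'').
  { split.
    - intros b Hb. apply HK'J. unfold K'' in Hb. apply nodup_In in Hb. auto.
    - exists h. destruct Hh as [Hc Ha']. split; auto. intros b Hb. unfold K''.
      apply nodup_In. auto. }
  specialize (Hmin (length K'') (ex_intro _ K'' (conj Hr eq_refl))). lia.
Qed.

(** ** Existence of parallel steps *)

Definition tgd_eq_dec : forall s s' : tgd, {s = s'} + {s <> s'}.
Proof.
  intros s s'. decide equality; apply list_eq_dec; apply atom_eq_dec; apply vterm_eq_dec.
Defined.

Definition pc_eq_dec : forall c c' : tgd * list term, {c = c'} + {c <> c'}.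
Proof. intros c c'. decide equality; [apply (list_eq_dec term_eq_dec) | apply tgd_eq_dec]. Defined.

Fixpoint tup (D : list term) (n : nat) : list (list term) :=
  match n with
  | 0 => [[]]
  | S n => flat_map (fun d => map (cons d) (tup D n)) D
  end.

Lemma tup_In D n vs : length vs = n -> (forall t, In t vs -> In t D) -> In vs (tup D n).
Proof.
  revert vs; induction n as [|n IH]; intros vs Hl HD; destruct vs as [|v vs]; simpl in *; try lia; auto.
  apply in_flat_map. exists v. split; auto. apply in_map. apply IH; auto.
Qed.

Lemma tup_len D n vs : In vs (tup D n) -> length vs = n.
Proof.
  revert vs; induction n as [|n IH]; intros vs; simpl.
  - intros [<-|[]]; auto.
  - intros H. apply in_flat_map in H as [d [_ H]]. apply in_map_iff in H as [vs' [<- H]].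
    simpl. f_equal. auto.
Qed.

Fixpoint assign (bv : list nat) (vs : list term) (x : nat) : term :=
  match bv, vs with
  | v :: bv, t :: vs => if Nat.eq_dec x v then t else assign bv vs x
  | _, _ => Null 0
  end.

Lemma assign_map bv h x : In x bv -> assign bv (map h bv) x = h x.
Proof.
  induction bv as [|v bv IH]; simpl; [tauto|]. intros [<-|H].
  - destruct (Nat.eq_dec v v); congruence.
  - destruct (Nat.eq_dec x v); subst; auto.
Qed.

Lemma map_assign bv vs : NoDup bv -> length vs = length bv -> map (assign bv vs) bv = vs.
Proof.
  revert vs. induction bv as [|v bv IH]; intros [|t vs] Hn Hl; simpl in *; try lia; auto.
  inversion Hn; subst. destruct (Nat.eq_dec v v); [|congruence]. f_equal.
  transitivity (map (assign bv vs) bv); [|apply IH; auto]. apply map_ext_in. intros x Hx.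
  destruct (Nat.eq_dec x v); subst; tauto.
Qed.

Lemma trigger_agree Sigma I s h k : agree_on (body_vars s) h k -> trigger Sigma I s h -> trigger Sigma I s k.
Proof.
  intros Hag [Hs Hb]. split; auto. intros a Ha. rewrite <- (asub_ext h); auto.
  intros x Hx. apply Hag. unfold body_vars, atoms_vars. apply in_flat_map. eauto.
Qed.

Lemma active_agree I s h k : agree_on (body_vars s) h k -> active I s h -> active I s k.
Proof.
  intros Hag Hact [h' [Hag' Hh']]. apply Hact. exists h'. split; auto.
  intros x Hx. rewrite Hag; auto.
Qed.

Lemma in_list_max x l : In x l -> x <= list_max l.
Proof.
  intros H. pose proof (proj1 (list_max_le l (list_max l)) (le_n _)) as HF.
  rewrite Forall_forall in HF. auto.
Qed.

Lemma pair_inj M i j x y : x < M -> y < M -> i * M + x = j * M + y -> i = j /\ x = y.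
Proof.
  intros Hx Hy H. destruct (Nat.lt_trichotomy i j) as [Hij|[Hij|Hij]].
  - exfalso. assert (i * M + M <= j * M) by nia. lia.
  - subst. lia.
  - exfalso. assert (j * M + M <= i * M) by nia. lia.
Qed.

Definition nullidx (t : term) : nat := match t with Null n => n | _ => 0 end.

Lemma par_step_exists Sigma I : exists J, par_step Sigma I J.
Proof.
  set (D := nodup term_eq_dec (flat_map atom_args I)).
  set (bv := fun s => nodup Nat.eq_dec (body_vars s)).
  set (cands := flat_map (fun s => map (fun vs => (s, vs)) (tup D (length (bv s))))
                         (nodup tgd_eq_dec Sigma)).
  set (good := fun c : tgd * list term =>
        trigger Sigma I (fst c) (assign (bv (fst c)) (snd c)) /\
        active I (fst c) (assign (bv (fst c)) (snd c))).
  set (C := filter (fun c => if excluded_middle_informative (good c) then true else false)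
             (nodup pc_eq_dec cands)).
  set (base := S (list_max (map nullidx (flat_map atom_args I)))).
  set (M := S (list_max (flat_map (fun s => atoms_vars (Defs.head s)) Sigma))).
  set (mk := fun i (c : tgd * list term) =>
        (fst c, fun x => if in_dec Nat.eq_dec x (body_vars (fst c)) then assign (bv (fst c)) (snd c) x
                          else Null (base + i * M + x))).
  set (dc := (([], []) : tgd, ([] : list term))).
  set (ts := map (fun i => mk i (nth i C dc)) (seq 0 (length C))).
  assert (Hlen : length ts = length C). { unfold ts. rewrite length_map, length_seq. auto. }
  assert (Hnth : forall i, i < length C -> nth i ts dflt_trig = mk i (nth i C dc)).
  { intros i Hi. unfold ts. rewrite nth_indep with (d' := (fun i => mk i (nth i C dc)) 0) by (rewrite length_map, length_seq; auto).
    rewrite (map_nth (fun i0 => mk i0 (nth i0 C dc)) (seq 0 (length C)) 0 i). rewrite seq_nth; auto. }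
  assert (HC : forall c, In c C <-> In c cands /\ good c).
  { intros c. unfold C. rewrite filter_In, nodup_In.
    destruct (excluded_middle_informative (good c)); intuition congruence. }
  assert (Hcand : forall s vs, In (s, vs) cands -> In s Sigma /\ length vs = length (bv s)).
  { intros s vs H. unfold cands in H. apply in_flat_map in H as [s' [Hs' H]].
    apply in_map_iff in H as [vs' [E H]]. inversion E; subst.
    apply nodup_In in Hs'. split; auto. apply tup_len in H. auto. }
  assert (Hagmk : forall i c, agree_on (body_vars (fst c)) (assign (bv (fst c)) (snd c)) (snd (mk i c))).
  { intros i c x Hx. simpl. destruct (in_dec Nat.eq_dec x (body_vars (fst c))); tauto. }
  assert (Hfresh : forall n, occurs (Null n) I -> n < base).
  { intros n [a [Ha Hn]]. unfold base. apply Nat.lt_succ_r.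
    change n with (nullidx (Null n)). apply in_list_max. apply in_map. apply in_flat_map. eauto. }
  assert (HM : forall s x, In s Sigma -> is_evar s x -> x < M).
  { intros s x Hs [Hx _]. unfold M. apply Nat.lt_succ_r. apply in_list_max. apply in_flat_map. eauto. }
  exists (I ++ flat_map (fun p => map (asub (snd p)) (Defs.head (fst p))) ts).
  apply par_step_e. unfold tS, tH. exists ts. rewrite Hlen.
  split; [|split; [|split; [|split; [|split]]]]; auto.
  - intros p Hp. unfold ts in Hp. apply in_map_iff in Hp as [i [<- Hi]].
    apply in_seq in Hi. assert (Hc : In (nth i C dc) C) by (apply nth_In; lia).
    apply HC in Hc as [_ [Htr Hact]]. split.
    + eapply trigger_agree; [apply Hagmk|]. auto.
    + eapply active_agree; [apply Hagmk|]. auto.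
  - intros s h Htr Hact.
    assert (Hin : In (s, map h (bv s)) C).
    { apply HC. assert (Hag : agree_on (body_vars s) h (assign (bv s) (map h (bv s)))).
      { intros x Hx. rewrite assign_map; auto. unfold bv. apply nodup_In. auto. }
      split.
      - unfold cands. apply in_flat_map. exists s. split.
        + apply nodup_In. apply Htr.
        + apply in_map. apply tup_In. { apply length_map. }
          intros t Ht. apply in_map_iff in Ht as [x [<- Hx]]. unfold bv in Hx. apply nodup_In in Hx.
          unfold D. apply nodup_In. destruct (trigger_occurs _ _ _ _ _ Htr Hx) as [a [Ha Ht]].
          apply in_flat_map. eauto.
      - split; simpl.
        + eapply trigger_agree; eauto.
        + eapply active_agree; eauto. }
    apply In_nth with (d := dc) in Hin as [i [Hi Hei]].
    exists (snd (mk i (s, map h (bv s)))). split.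
    + replace (s, snd (mk i (s, map h (bv s)))) with (nth i ts dflt_trig).
      * apply nth_In. lia.
      * rewrite Hnth by auto. rewrite Hei. reflexivity.
    + intros x Hx. simpl. destruct (in_dec Nat.eq_dec x (body_vars s)); [|tauto].
      rewrite assign_map; auto. unfold bv. apply nodup_In. auto.
  - intros i j Hi Hj Hs Hag. rewrite !Hnth in * by auto. simpl in Hs, Hag.
    destruct (nth i C dc) as [s vs] eqn:Ei. destruct (nth j C dc) as [s' vs'] eqn:Ej. simpl in *. subst s'.
    assert (HiC : In (s, vs) C) by (rewrite <- Ei; apply nth_In; auto).
    assert (HjC : In (s, vs') C) by (rewrite <- Ej; apply nth_In; auto).
    apply HC in HiC as [HiC _]. apply HC in HjC as [HjC _].
    apply Hcand in HiC as [_ Hl1]. apply Hcand in HjC as [_ Hl2].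
    assert (vs = vs').
    { rewrite <- (map_assign (bv s) vs), <- (map_assign (bv s) vs'); try apply NoDup_nodup; auto.
      apply map_ext_in. intros x Hx. unfold bv in Hx. apply nodup_In in Hx. specialize (Hag x Hx).
      cbv beta in Hag. destruct (in_dec Nat.eq_dec x (body_vars s)); [exact Hag | tauto]. }
    subst vs'. apply (proj1 (NoDup_nth C dc)); [apply NoDup_filter, NoDup_nodup | auto | auto | congruence].
  - intros i x Hi Hx. rewrite Hnth in * by auto. simpl in *.
    destruct (in_dec Nat.eq_dec x (body_vars (fst (nth i C dc)))) as [Hb|Hb].
    { exfalso. apply Hx; auto. }
    eexists; split; [reflexivity|]. intros Ho. apply Hfresh in Ho. lia.
  - intros i j x y Hi Hj Hx Hy Heq. rewrite !Hnth in * by auto. simpl in *.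
    destruct (in_dec Nat.eq_dec x (body_vars (fst (nth i C dc)))) as [Hb|Hb]; [exfalso; apply Hx; auto|].
    destruct (in_dec Nat.eq_dec y (body_vars (fst (nth j C dc)))) as [Hb'|Hb']; [exfalso; apply Hy; auto|].
    injection Heq as Heq.
    assert (Hsi : In (fst (nth i C dc)) Sigma).
    { destruct (nth i C dc) as [s vs] eqn:E. simpl. assert (In (s, vs) C) by (rewrite <- E; apply nth_In; auto).
      apply HC in H as [H _]. apply Hcand in H. tauto. }
    assert (Hsj : In (fst (nth j C dc)) Sigma).
    { destruct (nth j C dc) as [s vs] eqn:E. simpl. assert (In (s, vs) C) by (rewrite <- E; apply nth_In; auto).
      apply HC in H as [H _]. apply Hcand in H. tauto. }
    apply pair_inj with M; [apply (HM _ x Hsi Hx) | apply (HM _ y Hsj Hy) | lia].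
Qed.


Lemma path_atoms_In st w a : In a (path_atoms st w) <->
  exists i, i < length w /\ a = AE (VV (st + i)) (VC (nth i w false)) (VV (st + S i)).
Proof.
  revert st. induction w as [|b w IH]; intros st; simpl.
  - split; [tauto|]. intros [i [Hi _]]. lia.
  - rewrite IH. split.
    + intros [<-|[i [Hi ->]]].
      * exists 0. split; [lia|]. f_equal; f_equal; lia.
      * exists (S i). split; [lia|]. f_equal; f_equal; lia.
    + intros [[|i] [Hi ->]].
      * left. f_equal; f_equal; lia.
      * right. exists i. split; [lia|]. f_equal; f_equal; lia.
Qed.

Lemma atoms_vars_cons a l : atoms_vars (a :: l) = avars a ++ atoms_vars l.
Proof. reflexivity. Qed.
Lemma atoms_vars_app l1 l2 : atoms_vars (l1 ++ l2) = atoms_vars l1 ++ atoms_vars l2.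
Proof. unfold atoms_vars. apply flat_map_app. Qed.

Lemma path_vars st w x : In x (atoms_vars (path_atoms st w)) <-> w <> [] /\ st <= x <= st + length w.
Proof.
  revert st. induction w as [|b w IH]; intros st.
  - simpl. split; [tauto|]. intros [H _]; congruence.
  - change (path_atoms st (b :: w)) with (AE (VV st) (VC b) (VV (S st)) :: path_atoms (S st) w).
    rewrite atoms_vars_cons, in_app_iff, IH. simpl. split.
    + intros [[E|[E|[]]]|[Hw Hx]]; subst; split; try congruence; lia.
    + intros [_ Hx]. destruct (Nat.eq_dec x st) as [->|Hne]; [tauto|].
      destruct (Nat.eq_dec x (S st)) as [->|Hne2]; [tauto|].
      right. destruct w; simpl in *; [lia|]. split; [congruence|lia].
Qed.

Lemma rule_tgd_eq l r : rule_tgd (l, r) =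
  (path_atoms 0 l, AL (VV 0) (VV (S (length l))) :: path_atoms (S (length l)) r ++
                    [AR (VV (length l)) (VV (S (length l) + length r))]).
Proof. reflexivity. Qed.

Lemma Sigma_R_In Theta s : In s (Sigma_R Theta) ->
  (exists l r, In (l, r) Theta /\ s = rule_tgd (l, r)) \/
  (exists c, s = tgd_L c) \/ (exists c, s = tgd_R c).
Proof.
  unfold Sigma_R, Sigma_Theta. rewrite in_app_iff. intros [H|H].
  - apply in_map_iff in H as [[l r] [<- H]]. left. eauto.
  - simpl in H. right. destruct H as [<-|[<-|[<-|[<-|[]]]]]; eauto.
Qed.

Lemma rule_in_Sigma Theta l r : In (l, r) Theta -> In (rule_tgd (l, r)) (Sigma_R Theta).
Proof. intros H. unfold Sigma_R, Sigma_Theta. apply in_app_iff. left. apply in_map_iff. eauto. Qed.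
Lemma L_in_Sigma Theta c : In (tgd_L c) (Sigma_R Theta).
Proof. unfold Sigma_R. apply in_app_iff. right. destruct c; simpl; tauto. Qed.
Lemma R_in_Sigma Theta c : In (tgd_R c) (Sigma_R Theta).
Proof. unfold Sigma_R. apply in_app_iff. right. destruct c; simpl; tauto. Qed.

Lemma rule_body_vars l r : body_vars (rule_tgd (l, r)) = atoms_vars (path_atoms 0 l).
Proof. reflexivity. Qed.

Lemma zero_body Theta s : (forall l r, In (l, r) Theta -> l <> nil) ->
  In s (Sigma_R Theta) -> In 0 (body_vars s).
Proof.
  intros Hl Hs. apply Sigma_R_In in Hs as [[l [r [Hin ->]]]|[[c ->]|[c ->]]].
  - rewrite rule_body_vars. apply path_vars. split; [eapply Hl; eauto| lia].
  - simpl; tauto.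
  - simpl; tauto.
Qed.

(** ** Gradings *)

Definition gcond (G : term -> nat) (A : atom term) : Prop :=
  match A with
  | AE t1 _ t3 => G t3 = G t1
  | AL t1 t2 => G t2 = S (G t1)
  | AR t1 t2 => G t2 = S (G t1)
  end.

Definition graded (g : term -> nat) (I : instance) : Prop := forall A, In A I -> gcond g A.

Lemma gcond_ext G G' A : (forall u, In u (atom_args A) -> G u = G' u) -> gcond G A -> gcond G' A.
Proof. intros H; destruct A; simpl in *; rewrite !H by tauto; auto. Qed.

Lemma tgd_grade_rule l r G h : l <> nil ->
  (forall a, In a (body (rule_tgd (l, r))) -> gcond G (asub h a)) ->
  (forall x, is_evar (rule_tgd (l, r)) x -> G (h x) = S (G (h 0))) ->
  forall a, In a (Defs.head (rule_tgd (l, r))) -> gcond G (asub h a).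
Proof.
  intros Hl Hb He.
  set (n := length l). set (m := length r).
  assert (Hb1 : forall i, i < n -> G (h (S i)) = G (h i)).
  { intros i Hi.
    assert (Hin' : In (AE (VV i) (VC (nth i l false)) (VV (S i))) (body (rule_tgd (l, r)))).
    { rewrite rule_tgd_eq. apply path_atoms_In. exists i. split; auto. }
    exact (Hb _ Hin'). }
  assert (Hb2 : forall i, i <= n -> G (h i) = G (h 0)).
  { induction i; intros Hi; auto. rewrite Hb1 by lia. apply IHi. lia. }
  assert (Hev : forall x, S n <= x <= S n + m -> G (h x) = S (G (h 0))).
  { intros x Hx. apply He. split.
    - rewrite rule_tgd_eq. unfold Defs.head, snd. rewrite atoms_vars_cons, atoms_vars_app, !in_app_iff.
      destruct (Nat.eq_dec x (S n + m)) as [->|Hne].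
      + right. right. unfold atoms_vars, avars. simpl. tauto.
      + right. left. apply path_vars. destruct r as [|b r'].
        * exfalso. unfold m in Hx, Hne. simpl length in Hx, Hne. lia.
        * split; [congruence|]. unfold m in Hx. lia.
    - rewrite rule_body_vars. rewrite path_vars. unfold n in Hx. lia. }
  rewrite rule_tgd_eq. unfold Defs.head, snd. intros a [<-|Ha].
  + unfold asub, amap, vsub, gcond. apply Hev. lia.
  + apply in_app_iff in Ha as [Ha|[<-|[]]].
    * apply path_atoms_In in Ha as [i [Hi ->]]. unfold asub, amap, vsub, gcond.
      rewrite (Hev (S (length l) + i)), (Hev (S (length l) + S i)); auto; unfold m, n; lia.
    * unfold asub, amap, vsub, gcond. rewrite (Hev (S (length l) + length r)) by (unfold n, m; lia). rewrite (Hb2 (length l)); auto.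
Qed.

Lemma tgd_grade_L c G h :
  (forall a, In a (body (tgd_L c)) -> gcond G (asub h a)) ->
  (forall x, is_evar (tgd_L c) x -> G (h x) = S (G (h 0))) ->
  forall a, In a (Defs.head (tgd_L c)) -> gcond G (asub h a).
Proof.
  intros Hb He.
  assert (B1 : G (h 1) = G (h 0)) by (apply (Hb (AE (VV 0) (VC c) (VV 1))); simpl; tauto).
  assert (B2 : G (h 2) = S (G (h 1))) by (apply (Hb (AL (VV 1) (VV 2))); simpl; tauto).
  assert (E3 : G (h 3) = S (G (h 0))).
  { apply He. split; simpl; [tauto|]. intros [H|[H|[H|[H|[]]]]]; discriminate. }
  intros a [<-|[<-|[]]]; unfold asub, amap, vsub, gcond; congruence.
Qed.

Lemma tgd_grade_R c G h :
  (forall a, In a (body (tgd_R c)) -> gcond G (asub h a)) ->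
  (forall x, is_evar (tgd_R c) x -> G (h x) = S (G (h 0))) ->
  forall a, In a (Defs.head (tgd_R c)) -> gcond G (asub h a).
Proof.
  intros Hb He.
  assert (B1 : G (h 1) = S (G (h 0))) by (apply (Hb (AR (VV 0) (VV 1))); simpl; tauto).
  assert (B2 : G (h 2) = G (h 0)) by (apply (Hb (AE (VV 0) (VC c) (VV 2))); simpl; tauto).
  assert (E3 : G (h 3) = S (G (h 0))).
  { apply He. split; simpl; [tauto|]. intros [H|[H|[H|[H|[]]]]]; discriminate. }
  intros a [<-|[<-|[]]]; unfold asub, amap, vsub, gcond; congruence.
Qed.

Lemma tgd_grade Theta s G h : (forall l r, In (l, r) Theta -> l <> nil) ->
  In s (Sigma_R Theta) ->
  (forall a, In a (body s) -> gcond G (asub h a)) ->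
  (forall x, is_evar s x -> G (h x) = S (G (h 0))) ->
  forall a, In a (Defs.head s) -> gcond G (asub h a).
Proof.
  intros Hl Hs. apply Sigma_R_In in Hs as [[l [r [Hin ->]]]|[[c ->]|[c ->]]].
  - apply tgd_grade_rule. eapply Hl; eauto.
  - apply tgd_grade_L.
  - apply tgd_grade_R.
Qed.

Lemma grade_step Theta g I J : (forall l r, In (l, r) Theta -> l <> nil) ->
  graded g I -> par_step (Sigma_R Theta) I J -> exists g', graded g' J.
Proof.
  intros Hl Hg HP. apply par_step_e in HP. destruct HP as [ts [H1 [_ [_ [H4 [H5 HJ]]]]]].
  assert (Htr : forall i, i < length ts -> trigger (Sigma_R Theta) I (tS ts i) (tH ts i)).
  { intros i Hi. unfold tS, tH. apply H1. apply nth_In; auto. }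
  set (P := fun u (p : nat * nat) => fst p < length ts /\ is_evar (tS ts (fst p)) (snd p) /\ tH ts (fst p) (snd p) = u).
  assert (Puniq : forall u p p', P u p -> P u p' -> p = p').
  { intros u [i x] [j y] [Hi [Hx Hu]] [Hj [Hy Hu']]. simpl in *.
    destruct (H5 i j x y) as [E1 E2]; try congruence; auto. }
  assert (Hfr : forall u, occurs u I -> ~ exists p, P u p).
  { intros u Hu [[i x] [Hi [Hx Heq]]]. simpl in *. destruct (H4 i x Hi Hx) as [n [Hn Hno]].
    apply Hno. rewrite <- Hn, Heq. auto. }
  set (g' := ext P (fun p => S (g (tH ts (fst p) 0))) g).
  assert (Hg'I : forall A, In A I -> gcond g' A).
  { intros A HA. apply gcond_ext with g; [|auto]. intros u Hu. unfold g'. rewrite ext_out; auto.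
    apply Hfr. exists A; auto. }
  exists g'. intros A HA. subst J. apply in_app_iff in HA as [HA|HA]; auto.
  apply in_flat_map in HA as [p [Hp HA]]. apply In_nth with (d := dflt_trig) in Hp as [i [Hi Hpi]].
  subst p. apply in_map_iff in HA as [b [<- Hb]].
  change (fst (nth i ts dflt_trig)) with (tS ts i) in *. change (snd (nth i ts dflt_trig)) with (tH ts i).
  apply (tgd_grade Theta (tS ts i) g' (tH ts i) Hl); auto.
  - apply (Htr i Hi).
  - intros a Ha. apply Hg'I. apply (Htr i Hi). auto.
  - intros x Hx. unfold g' at 1. rewrite (ext_in P _ _ (tH ts i x) (i, x)).
    + simpl. f_equal. unfold g'. rewrite ext_out; auto. apply Hfr.
      eapply trigger_occurs; [apply Htr; auto|]. apply zero_body with Theta; auto. apply Htr; auto.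
    + intros; eapply Puniq; eauto.
    + unfold P; simpl; auto.
Qed.


Definition pathP (I : instance) (q : nat -> term) (u : word) : Prop :=
  forall i, i < length u -> In (AE (q i) (Const (nth i u false)) (q (S i))) I.

Lemma left_ext Theta I q u p z0 : model (Sigma_R Theta) I -> pathP I q u -> p <= length u ->
  In (AL (q p) z0) I -> forall k, k <= p -> exists z,
    In (AL (q (p - k)) (z (p - k))) I /\ z p = z0 /\
    forall i, p - k <= i < p -> In (AE (z i) (Const (nth i u false)) (z (S i))) I.
Proof.
  intros HM Hp Hpu H0 k. induction k as [|k IH]; intros Hk.
  - exists (fun _ => z0). rewrite Nat.sub_0_r. split; auto. split; auto. intros; lia.
  - destruct IH as [z [Hz1 [Hz2 Hz3]]]; [lia|].
    set (i0 := p - S k). assert (Ei0 : p - k = S i0) by (unfold i0; lia).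
    rewrite Ei0 in Hz1.
    set (c := nth i0 u false).
    set (hL := fun v => match v with 0 => q i0 | 1 => q (S i0) | 2 => z (S i0) | _ => Null 0 end).
    destruct (HM (tgd_L c) hL) as [h'' [Hag Hh]].
    { split; [apply L_in_Sigma|]. intros a Ha. simpl in Ha. destruct Ha as [<-|[<-|[]]]; simpl.
      - apply Hp. unfold i0; lia.
      - exact Hz1. }
    assert (A0 : q i0 = h'' 0) by (apply (Hag 0); simpl; tauto).
    assert (A2 : z (S i0) = h'' 2) by (apply (Hag 2); simpl; tauto).
    assert (H1 : In (AL (h'' 0) (h'' 3)) I) by (apply (Hh (AL (VV 0) (VV 3))); simpl; tauto).
    assert (H2 : In (AE (h'' 3) (Const c) (h'' 2)) I) by (apply (Hh (AE (VV 3) (VC c) (VV 2))); simpl; tauto).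
    exists (fun i => if Nat.eq_dec i i0 then h'' 3 else z i). fold i0. split; [|split].
    + destruct (Nat.eq_dec i0 i0); [|congruence]. rewrite A0. exact H1.
    + destruct (Nat.eq_dec p i0); [unfold i0 in *; lia|]. auto.
    + intros i Hi. destruct (Nat.eq_dec i i0) as [->|Hne].
      * destruct (Nat.eq_dec (S i0) i0); [lia|]. rewrite A2. exact H2.
      * destruct (Nat.eq_dec (S i) i0); [lia|]. apply Hz3. lia.
Qed.

Lemma right_ext Theta I q u v s0 s1 ly z0 : model (Sigma_R Theta) I -> pathP I q u ->
  s0 + ly <= length u ->
  (forall k, k < ly -> nth (s1 + k) v false = nth (s0 + k) u false) ->
  In (AR (q s0) z0) I -> forall k, k <= ly -> exists z,
    In (AR (q (s0 + k)) (z (s1 + k))) I /\ z s1 = z0 /\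
    forall i, s1 <= i < s1 + k -> In (AE (z i) (Const (nth i v false)) (z (S i))) I.
Proof.
  intros HM Hp Hpu Hyv H0 k. induction k as [|k IH]; intros Hk.
  - exists (fun _ => z0). rewrite !Nat.add_0_r. split; auto. split; auto. intros; lia.
  - destruct IH as [z [Hz1 [Hz2 Hz3]]]; [lia|].
    set (c := nth (s0 + k) u false).
    set (hR := fun w => match w with 0 => q (s0 + k) | 1 => z (s1 + k) | 2 => q (S (s0 + k)) | _ => Null 0 end).
    destruct (HM (tgd_R c) hR) as [h'' [Hag Hh]].
    { split; [apply R_in_Sigma|]. intros a Ha. simpl in Ha. destruct Ha as [<-|[<-|[]]]; simpl.
      - exact Hz1.
      - apply Hp. lia. }
    assert (A1 : z (s1 + k) = h'' 1) by (apply (Hag 1); simpl; tauto).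
    assert (A2 : q (S (s0 + k)) = h'' 2) by (apply (Hag 2); simpl; tauto).
    assert (H1 : In (AE (h'' 1) (Const c) (h'' 3)) I) by (apply (Hh (AE (VV 1) (VC c) (VV 3))); simpl; tauto).
    assert (H2 : In (AR (h'' 2) (h'' 3)) I) by (apply (Hh (AR (VV 2) (VV 3))); simpl; tauto).
    exists (fun i => if Nat.eq_dec i (S (s1 + k)) then h'' 3 else z i). split; [|split].
    + replace (s0 + S k) with (S (s0 + k)) by lia. replace (s1 + S k) with (S (s1 + k)) by lia.
      destruct (Nat.eq_dec (S (s1 + k)) (S (s1 + k))); [|congruence]. rewrite A2. exact H2.
    + destruct (Nat.eq_dec s1 (S (s1 + k))); [lia|]. auto.
    + intros i Hi. destruct (Nat.eq_dec i (s1 + k)) as [->|Hne].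
      * destruct (Nat.eq_dec (s1 + k) (S (s1 + k))); [lia|].
        destruct (Nat.eq_dec (S (s1 + k)) (S (s1 + k))); [|congruence].
        rewrite Hyv by lia. fold c. rewrite A1. exact H1.
      * destruct (Nat.eq_dec i (S (s1 + k))); [lia|].
        destruct (Nat.eq_dec (S i) (S (s1 + k))); [lia|]. apply Hz3. lia.
Qed.

Lemma nth_app3_1 (x l y : word) i : i < length x -> nth i (x ++ l ++ y) false = nth i x false.
Proof. intros; apply app_nth1; auto. Qed.
Lemma nth_app3_2 (x l y : word) i : length x <= i < length x + length l ->
  nth i (x ++ l ++ y) false = nth (i - length x) l false.
Proof. intros; rewrite app_nth2 by lia. apply app_nth1. lia. Qed.
Lemma nth_app3_3 (x l y : word) i : length x + length l <= i ->
  nth i (x ++ l ++ y) false = nth (i - length x - length l) y false.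
Proof. intros; rewrite app_nth2 by lia. rewrite app_nth2 by lia. reflexivity. Qed.

Lemma prop_step Theta I q u v : (forall l r, In (l, r) Theta -> l <> nil) ->
  model (Sigma_R Theta) I -> pathP I q u -> rstep Theta u v ->
  exists q', pathP I q' v /\ In (AL (q 0) (q' 0)) I.
Proof.
  intros Hl HM Hp [x [y [l [r [Hin [-> ->]]]]]].
  assert (Hl0 : l <> []) by (eapply Hl; eauto).
  set (p := length x). set (n := length l). set (m := length r).
  assert (Hlen : length (x ++ l ++ y) = p + n + length y) by (rewrite !length_app; unfold p, n; lia).
  assert (Hlenv : length (x ++ r ++ y) = p + m + length y) by (rewrite !length_app; unfold p, m; lia).
  set (h := fun z => q (p + z)).
  destruct (HM (rule_tgd (l, r)) h) as [h' [Hag Hh]].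
  { split; [apply rule_in_Sigma; auto|]. intros a Ha. rewrite rule_tgd_eq in Ha. simpl body in Ha.
    apply path_atoms_In in Ha as [i [Hi ->]]. unfold asub, amap, vsub, h.
    replace (p + (0 + S i)) with (S (p + (0 + i))) by lia.
    replace (nth i l false) with (nth (p + (0 + i)) (x ++ l ++ y) false).
    - apply Hp. lia.
    - rewrite nth_app3_2 by (fold p n; lia). f_equal. fold p. lia. }
  assert (Hbv : forall z, z <= n -> In z (body_vars (rule_tgd (l, r)))).
  { intros z Hz. rewrite rule_body_vars, path_vars. split; auto. fold n; lia. }
  assert (E0 : q p = h' 0) by (rewrite <- (Hag 0) by (apply Hbv; lia); unfold h; f_equal; lia).
  assert (En : q (p + n) = h' n) by (rewrite <- (Hag n) by (apply Hbv; lia); unfold h; f_equal; lia).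
  assert (A1 : In (AL (h' 0) (h' (S n))) I).
  { apply (Hh (AL (VV 0) (VV (S n)))). rewrite rule_tgd_eq. simpl; tauto. }
  assert (A2 : forall j, j < m -> In (AE (h' (S n + j)) (Const (nth j r false)) (h' (S n + S j))) I).
  { intros j Hj. apply (Hh (AE (VV (S n + j)) (VC (nth j r false)) (VV (S n + S j)))).
    rewrite rule_tgd_eq. simpl Defs.head. right. apply in_app_iff. left. apply path_atoms_In.
    exists j. split; auto. }
  assert (A3 : In (AR (h' n) (h' (S n + m))) I).
  { apply (Hh (AR (VV n) (VV (S n + m)))). rewrite rule_tgd_eq. simpl Defs.head. right.
    apply in_app_iff. right. simpl; tauto. }
  destruct (left_ext Theta I q (x ++ l ++ y) p (h' (S n)) HM Hp ltac:(lia) ltac:(rewrite E0; exact A1) p (le_n p))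
    as [zL [HL1 [HL2 HL3]]].
  destruct (right_ext Theta I q (x ++ l ++ y) (x ++ r ++ y) (p + n) (p + m) (length y) (h' (S n + m)) HM Hp
     ltac:(lia) ltac:(intros k Hk; rewrite nth_app3_3 by (fold p m; lia); rewrite nth_app3_3 by (fold p n; lia);
        f_equal; fold p n m; lia) ltac:(rewrite En; exact A3) (length y) (le_n _))
    as [zR [HR1 [HR2 HR3]]].
  set (q' := fun i => if i <? p then zL i else if i <=? p + m then h' (S n + (i - p)) else zR i).
  assert (Q1 : forall i, i <= p -> q' i = zL i).
  { intros i Hi. unfold q'. destruct (Nat.ltb_spec i p); auto.
    destruct (Nat.leb_spec i (p + m)); [|lia]. replace i with p by lia.
    rewrite Nat.sub_diag, Nat.add_0_r. auto. }
  assert (Q2 : forall i, p <= i <= p + m -> q' i = h' (S n + (i - p))).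
  { intros i Hi. unfold q'. destruct (Nat.ltb_spec i p); [lia|].
    destruct (Nat.leb_spec i (p + m)); [auto|lia]. }
  assert (Q3 : forall i, p + m <= i -> q' i = zR i).
  { intros i Hi. unfold q'. destruct (Nat.ltb_spec i p); [lia|].
    destruct (Nat.leb_spec i (p + m)); auto. replace i with (p + m) by lia.
    rewrite HR2. f_equal. lia. }
  exists q'. split.
  - intros i Hi. rewrite Hlenv in Hi.
    destruct (Nat.lt_ge_cases i p) as [H1|H1].
    + rewrite Q1, Q1 by lia. rewrite nth_app3_1 by auto. rewrite <- (nth_app3_1 x l y) by auto.
      apply HL3. lia.
    + destruct (Nat.lt_ge_cases i (p + m)) as [H2|H2].
      * rewrite Q2, Q2 by lia. rewrite nth_app3_2 by (fold p m; lia). fold p.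
        replace (S i - p) with (S (i - p)) by lia. apply A2. lia.
      * rewrite Q3, Q3 by lia. apply HR3. lia.
  - rewrite Q1 by lia. rewrite Nat.sub_diag in HL1. exact HL1.
Qed.

Lemma I_word_from_path k w i : i < length w ->
  In (AE (Null (k + i)) (Const (nth i w false)) (Null (k + S i))) (I_word_from k w).
Proof.
  revert k i. induction w as [|b w IH]; intros k i Hi; simpl in *; [lia|].
  destruct i as [|i].
  - left. f_equal; f_equal; lia.
  - right. replace (k + S i) with (S k + i) by lia. replace (k + S (S i)) with (S k + S i) by lia.
    apply IH. lia.
Qed.

Lemma I_word_graded k w : graded (fun _ => 0) (I_word_from k w).
Proof.
  revert k. induction w as [|b w IH]; intros k A HA; simpl in HA; [tauto|].
  destruct HA as [<-|HA]; [reflexivity|]. eapply IH; eauto.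
Qed.

Lemma rstep_nonempty Theta u v : (forall l r, In (l, r) Theta -> l <> nil) ->
  rstep Theta u v -> u <> [].
Proof.
  intros Hl [x [y [l [r [Hin [-> _]]]]]] E. apply (Hl l r Hin).
  destruct l; auto. exfalso. destruct x; simpl in E; discriminate.
Qed.

Lemma model_of_no_active Sigma I : ~ has_active_trigger Sigma I -> model Sigma I.
Proof.
  intros Hna s h Htr. apply NNPP. intros Hno. apply Hna. exists s, h. split; auto.
Qed.

Lemma no_model Theta w0 I c g : (forall l r, In (l, r) Theta -> l <> nil) ->
  infinite_derivation Theta w0 ->
  model (Sigma_R Theta) I -> hom_into c (I_word w0) I -> graded g I -> False.
Proof.
  intros Hl [fw [Hf0 Hfs]] HM [Hcc Hca] Hg.
  set (q0 := fun i => c (Null i)).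
  assert (Hp0 : pathP I q0 w0).
  { intros i Hi. unfold q0. rewrite <- (Hcc (nth i w0 false)).
    apply (Hca (AE (Null i) (Const (nth i w0 false)) (Null (S i)))).
    apply (I_word_from_path 0 w0 i Hi). }
  assert (Hk : forall k, exists q, pathP I q (fw k) /\ g (q 0) = g (q0 0) + k).
  { induction k as [|k [q [Hq Hgq]]].
    - exists q0. rewrite Hf0, Nat.add_0_r. auto.
    - destruct (prop_step Theta I q (fw k) (fw (S k)) Hl HM Hq (Hfs k)) as [q' [Hq' HL]].
      exists q'. split; auto. specialize (Hg _ HL). simpl in Hg. lia. }
  set (B := list_max (map g (flat_map atom_args I))).
  destruct (Hk (S B)) as [q [Hq Hgq]].
  assert (Hne : fw (S B) <> []) by (eapply rstep_nonempty; eauto).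
  assert (HA : In (AE (q 0) (Const (nth 0 (fw (S B)) false)) (q 1)) I).
  { apply Hq. destruct (fw (S B)); simpl; [congruence|lia]. }
  assert (g (q 0) <= B).
  { apply in_list_max. apply in_map. apply in_flat_map. exists (AE (q 0) (Const (nth 0 (fw (S B)) false)) (q 1)).
    simpl; auto. }
  lia.
Qed.

Definition Inv (w0 : word) (I : instance) : Prop :=
  (exists c, hom_into c (I_word w0) I) /\ (exists g, graded g I).

Lemma inv_step Theta w0 I : (forall l r, In (l, r) Theta -> l <> nil) ->
  infinite_derivation Theta w0 -> Inv w0 I ->
  exists K, core_chase_step (Sigma_R Theta) I K /\ Inv w0 K.
Proof.
  intros Hl Hd [[c Hc] [g Hg]].
  assert (Hact : has_active_trigger (Sigma_R Theta) I).
  { apply NNPP. intros Hna. apply model_of_no_active in Hna.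
    eapply no_model; eauto. }
  destruct (par_step_exists (Sigma_R Theta) I) as [J HP].
  destruct (core_exists J) as [K HK].
  assert (Hst : core_chase_step (Sigma_R Theta) I K) by (split; eauto).
  exists K. split; auto. split.
  - destruct (step_hom _ _ _ Hst) as [r Hr]. eexists. eapply hom_comp; eauto.
  - destruct (grade_step Theta g I J Hl Hg HP) as [g' Hg']. exists g'.
    intros A HA. apply Hg'. destruct HK as [[Hsub _] _]. apply Hsub. auto.
Qed.

Lemma dir2 Theta w0 : (forall l r, In (l, r) Theta -> l <> nil) ->
  infinite_derivation Theta w0 -> core_chase_infinite (Sigma_R Theta) (I_word w0).
Proof.
  intros Hl Hd.
  set (next := fun I => epsilon (inhabits ([] : instance))
                   (fun K => core_chase_step (Sigma_R Theta) I K /\ Inv w0 K)).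
  set (f := fun n => Nat.iter n next (I_word w0)).
  assert (H : forall n, Inv w0 (f n) /\ core_chase_step (Sigma_R Theta) (f n) (f (S n))).
  { assert (Hi : forall n, Inv w0 (f n)).
    { induction n as [|n IH].
      - split.
        + exists (fun t => t). apply hom_id. intros a; auto.
        + exists (fun _ => 0). apply I_word_graded.
      - change (f (S n)) with (next (f n)). unfold next. apply (epsilon_spec (inhabits ([] : instance))
          (fun K => core_chase_step (Sigma_R Theta) (f n) K /\ Inv w0 K)).
        apply inv_step; auto. }
    intros n. split; auto. change (f (S n)) with (next (f n)). unfold next.
    apply (epsilon_spec (inhabits ([] : instance))
          (fun K => core_chase_step (Sigma_R Theta) (f n) K /\ Inv w0 K)).
    apply inv_step; auto. }
  exists f. split; [reflexivity|]. intros n. apply H.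
Qed.


Definition rl (Theta : rws) k := nth k Theta ([], []).
Definition apply_step (Theta : rws) (st : nat * nat) (u : word) : word :=
  firstn (snd st) u ++ snd (rl Theta (fst st)) ++ skipn (snd st + length (fst (rl Theta (fst st)))) u.
Fixpoint wof Theta w0 (pi : list (nat * nat)) : word :=
  match pi with [] => w0 | st :: pi => apply_step Theta st (wof Theta w0 pi) end.
Definition word_eqb (a b : word) : bool := if list_eq_dec Bool.bool_dec a b then true else false.
Definition stepok Theta (st : nat * nat) (u : word) : bool :=
  (fst st <? length Theta) && (snd st + length (fst (rl Theta (fst st))) <=? length u) &&
  word_eqb (firstn (length (fst (rl Theta (fst st)))) (skipn (snd st) u)) (fst (rl Theta (fst st))).
Fixpoint validb Theta w0 pi : bool :=
  match pi with [] => true | st :: pi => validb Theta w0 pi && stepok Theta st (wof Theta w0 pi) end.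

Lemma decomp (u : word) p n : p + n <= length u ->
  u = firstn p u ++ firstn n (skipn p u) ++ skipn (p + n) u.
Proof.
  intros H. rewrite <- (firstn_skipn p u) at 1. f_equal.
  rewrite <- (firstn_skipn n (skipn p u)) at 1. f_equal. rewrite skipn_skipn. f_equal. lia.
Qed.

Lemma stepok_spec Theta k p u : stepok Theta (k, p) u = true ->
  k < length Theta /\ In (rl Theta k) Theta /\ p + length (fst (rl Theta k)) <= length u /\
  u = firstn p u ++ fst (rl Theta k) ++ skipn (p + length (fst (rl Theta k))) u.
Proof.
  unfold stepok, word_eqb. simpl. intros H. apply andb_prop in H as [H H3]. apply andb_prop in H as [H1 H2].
  apply Nat.ltb_lt in H1. apply Nat.leb_le in H2.
  destruct (list_eq_dec Bool.bool_dec _ _) as [E|]; [|discriminate].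
  split; auto. split; [apply nth_In; auto|]. split; auto.
  pose proof (decomp u p _ H2) as D. rewrite E in D. exact D.
Qed.

Lemma firstn_len (u : word) p : p <= length u -> length (firstn p u) = p.
Proof. intros; rewrite length_firstn; lia. Qed.

Lemma stepok_rstep Theta k p u : stepok Theta (k, p) u = true -> rstep Theta u (apply_step Theta (k, p) u).
Proof.
  intros H. apply stepok_spec in H as [_ [Hin [Hle Hu]]].
  destruct (rl Theta k) as [l r] eqn:Er. simpl in *.
  exists (firstn p u), (skipn (p + length l) u), l, r. split; auto. split; auto.
  unfold apply_step. simpl. rewrite Er. reflexivity.
Qed.

Lemma stepok_of_nth Theta k p u : k < length Theta ->
  p + length (fst (rl Theta k)) <= length u ->
  (forall i, i < length (fst (rl Theta k)) -> nth (p + i) u false = nth i (fst (rl Theta k)) false) ->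
  stepok Theta (k, p) u = true.
Proof.
  intros Hk Hle Hn. unfold stepok, word_eqb. simpl.
  apply andb_true_intro. split; [apply andb_true_intro; split; [apply Nat.ltb_lt | apply Nat.leb_le]; auto|].
  destruct (list_eq_dec Bool.bool_dec _ _) as [E|E]; auto. exfalso. apply E.
  apply nth_ext with (d := false) (d' := false).
  - rewrite length_firstn, length_skipn. lia.
  - intros i Hi. rewrite length_firstn, length_skipn in Hi. rewrite nth_firstn.
    destruct (Nat.ltb_spec i (length (fst (rl Theta k)))); [|lia].
    rewrite nth_skipn. apply Hn. lia.
Qed.

Lemma rstep_stepok Theta u v : rstep Theta u v ->
  exists k p, stepok Theta (k, p) u = true /\ v = apply_step Theta (k, p) u.
Proof.
  intros [x [y [l [r [Hin [-> ->]]]]]]. apply In_nth with (d := ([], [])) in Hin as [k [Hk Ek]].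
  exists k, (length x). assert (Erl : rl Theta k = (l, r)) by exact Ek.
  assert (Hx : firstn (length x) (x ++ l ++ y) = x).
  { rewrite firstn_app, Nat.sub_diag, firstn_O, app_nil_r. apply firstn_all. }
  assert (Hy : skipn (length x + length l) (x ++ l ++ y) = y).
  { rewrite skipn_app, skipn_all2 by lia. simpl. rewrite skipn_app.
    replace (length x + length l - length x) with (length l) by lia. rewrite skipn_all, Nat.sub_diag. reflexivity. }
  split.
  - apply stepok_of_nth; try rewrite Erl; simpl; auto.
    + rewrite !length_app. lia.
    + intros i Hi. rewrite app_nth2 by lia. rewrite app_nth1 by lia. f_equal. lia.
  - unfold apply_step. simpl. rewrite Erl. simpl. rewrite Hx, Hy. reflexivity.
Qed.

(** ** König *)

Fixpoint der Theta (u : word) (k : nat) : Prop :=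
  match k with 0 => True | S k => exists v, rstep Theta u v /\ der Theta v k end.

Lemma der_mono Theta k : forall u j, der Theta u k -> j <= k -> der Theta u j.
Proof.
  induction k as [|k IH]; intros u j H Hj; destruct j; simpl in *; auto; try lia.
  destruct H as [v [Hv Hd]]. exists v. split; auto. apply IH; auto. lia.
Qed.

Definition succs Theta (u : word) : list word :=
  flat_map (fun k => map (fun p => apply_step Theta (k, p) u)
     (filter (fun p => stepok Theta (k, p) u) (seq 0 (S (length u))))) (seq 0 (length Theta)).

Lemma succs_In Theta u v : rstep Theta u v -> In v (succs Theta u).
Proof.
  intros H. apply rstep_stepok in H as [k [p [Hok ->]]].
  pose proof Hok as Hs. apply stepok_spec in Hs as [Hk [_ [Hle _]]].
  apply in_flat_map. exists k. split; [apply in_seq; lia|]. apply in_map_iff. exists p. split; [reflexivity|]. apply filter_In. split; auto.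
  apply in_seq. lia.
Qed.

Lemma finite_bound Theta (l : list word) :
  (forall v, In v l -> exists k, ~ der Theta v k) -> exists K, forall v, In v l -> ~ der Theta v K.
Proof.
  induction l as [|a l IH]; intros H.
  - exists 0. intros v [].
  - destruct (H a (or_introl eq_refl)) as [ka Hka]. destruct IH as [K HK].
    { intros v Hv. apply H. right; auto. }
    exists (Nat.max ka K). intros v [<-|Hv] Hd.
    + apply Hka. eapply der_mono; eauto. lia.
    + apply (HK v Hv). eapply der_mono; eauto. lia.
Qed.

Lemma konig Theta w0 : ~ infinite_derivation Theta w0 -> exists N, ~ der Theta w0 N.
Proof.
  intros Hni. apply NNPP. intros Hall.
  set (P := fun u => forall k, der Theta u k).
  assert (HP0 : P w0). { intros k. apply NNPP. intros Hk. apply Hall. eauto. }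
  assert (Hs : forall u, P u -> exists v, rstep Theta u v /\ P v).
  { intros u Hu. apply NNPP. intros Hno.
    destruct (finite_bound Theta (succs Theta u)) as [K HK].
    { intros v Hv. apply NNPP. intros Hnk. apply Hno. exists v. split.
      - apply NNPP. intros Hr. apply Hnk. exfalso.
        unfold succs in Hv. apply in_flat_map in Hv as [k [_ Hv]]. apply in_map_iff in Hv as [p [<- Hp]].
        apply filter_In in Hp as [_ Hp]. apply Hr. apply stepok_rstep; auto.
      - intros k. apply NNPP. intros Hk. apply Hnk. eauto. }
    destruct (Hu (S K)) as [v [Hv Hd]]. apply (HK v); auto. apply succs_In; auto. }
  set (nxt := fun u => epsilon (inhabits ([] : word)) (fun v => rstep Theta u v /\ P v)).
  set (fw := fun n => Nat.iter n nxt w0).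
  assert (H : forall n, P (fw n) /\ rstep Theta (fw n) (fw (S n))).
  { assert (Hi : forall n, P (fw n)).
    { induction n as [|n IH]; [exact HP0|]. change (fw (S n)) with (nxt (fw n)).
      apply (epsilon_spec (inhabits ([] : word)) (fun v => rstep Theta (fw n) v /\ P v)). auto. }
    intros n. split; auto. change (fw (S n)) with (nxt (fw n)).
    apply (epsilon_spec (inhabits ([] : word)) (fun v => rstep Theta (fw n) v /\ P v)). auto. }
  apply Hni. exists fw. split; [reflexivity|]. intros n; apply H.
Qed.

Lemma valid_der Theta w0 pi : validb Theta w0 pi = true ->
  forall k, der Theta (wof Theta w0 pi) k -> der Theta w0 (length pi + k).
Proof.
  induction pi as [|[k0 p0] pi IH]; intros Hv k Hd; [exact Hd|].
  simpl in Hv. apply andb_prop in Hv as [Hv Hok]. change (length ((k0,p0)::pi) + k) with (S (length pi) + k). replace (S (length pi) + k) with (length pi + S k) by lia.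
  apply IH; auto. exists (apply_step Theta (k0, p0) (wof Theta w0 pi)). split; auto.
  apply stepok_rstep. auto.
Qed.

Lemma valid_bound Theta w0 N pi : ~ der Theta w0 N -> validb Theta w0 pi = true -> length pi < N.
Proof.
  intros HN Hv. destruct (Nat.lt_ge_cases (length pi) N); auto. exfalso. apply HN.
  apply der_mono with (length pi); auto. rewrite <- (Nat.add_0_r (length pi)).
  apply valid_der with (pi := pi); auto. simpl. auto.
Qed.

Definition exts Theta w0 pi : list (list (nat * nat)) :=
  map (fun st => st :: pi) (filter (fun st => stepok Theta st (wof Theta w0 pi))
    (flat_map (fun k => map (fun p => (k, p)) (seq 0 (S (length (wof Theta w0 pi))))) (seq 0 (length Theta)))).
Fixpoint seqs Theta w0 n : list (list (nat * nat)) :=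
  match n with 0 => [[]] | S n => flat_map (exts Theta w0) (seqs Theta w0 n) end.
Definition Vall Theta w0 N := flat_map (seqs Theta w0) (seq 0 N).

Lemma seqs_In Theta w0 n pi : In pi (seqs Theta w0 n) <-> validb Theta w0 pi = true /\ length pi = n.
Proof.
  revert pi. induction n as [|n IH]; intros pi; simpl.
  - split; [intros [<-|[]]; auto|]. intros [_ H]. destruct pi; simpl in *; [auto|lia].
  - rewrite in_flat_map. split.
    + intros [pi0 [H0 H1]]. apply IH in H0 as [Hv Hl]. unfold exts in H1.
      apply in_map_iff in H1 as [st [<- H1]]. apply filter_In in H1 as [_ H1]. simpl.
      rewrite Hv, H1. auto.
    + intros [Hv Hl]. destruct pi as [|[k p] pi0]; simpl in *; [lia|].
      apply andb_prop in Hv as [Hv Hok]. exists pi0. split; [apply IH; auto|].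
      unfold exts. apply in_map_iff. exists (k, p). split; [reflexivity|]. apply filter_In. split; auto.
      apply stepok_spec in Hok as [Hk [_ [Hle _]]]. apply in_flat_map. exists k.
      split; [apply in_seq; lia|]. apply in_map_iff. exists p. split; [reflexivity|]. apply in_seq. simpl in Hle. lia.
Qed.

Lemma Vall_In Theta w0 N pi : In pi (Vall Theta w0 N) <-> validb Theta w0 pi = true /\ length pi < N.
Proof.
  unfold Vall. rewrite in_flat_map. split.
  - intros [n [Hn H]]. apply in_seq in Hn. apply seqs_In in H as [H1 H2]. split; auto. lia.
  - intros [Hv Hl]. exists (length pi). split; [apply in_seq; lia|]. apply seqs_In. auto.
Qed.

Fixpoint code (pi : list (nat * nat)) : nat :=
  match pi with [] => 0 | st :: pi => S (Cantor.to_nat (Cantor.to_nat st, code pi)) end.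

Lemma to_nat_inj a b : Cantor.to_nat a = Cantor.to_nat b -> a = b.
Proof. intros H. rewrite <- (cancel_of_to a), <- (cancel_of_to b), H. auto. Qed.

Lemma code_inj pi pi' : code pi = code pi' -> pi = pi'.
Proof.
  revert pi'. induction pi as [|st pi IH]; intros [|st' pi'] H; try discriminate; auto.
  change (S (Cantor.to_nat (Cantor.to_nat st, code pi)) = S (Cantor.to_nat (Cantor.to_nat st', code pi'))) in H.
  apply eq_add_S in H. apply to_nat_inj in H. injection H as H1 H2.
  apply to_nat_inj in H1. subst. f_equal. auto.
Qed.

Definition Nd (pi : list (nat * nat)) (i : nat) : term := Null (Cantor.to_nat (code pi, i)).

Lemma Nd_inj pi i pi' i' : Nd pi i = Nd pi' i' -> pi = pi' /\ i = i'.
Proof.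
  unfold Nd. intros H. assert (E : Cantor.to_nat (code pi, i) = Cantor.to_nat (code pi', i')) by congruence.
  apply to_nat_inj in E. clear H. rename E into H. injection H as H1 H2.
  split; auto. apply code_inj; auto.
Qed.


Definition lk Theta k := fst (rl Theta k).
Definition rk Theta k := snd (rl Theta k).
Definition valid Theta w0 pi := validb Theta w0 pi = true.

Lemma valid_cons Theta w0 k p pi0 : valid Theta w0 ((k, p) :: pi0) <->
  valid Theta w0 pi0 /\ stepok Theta (k, p) (wof Theta w0 pi0) = true.
Proof. unfold valid. simpl. rewrite Bool.andb_true_iff. tauto. Qed.

Lemma child_facts Theta w0 k p pi0 : valid Theta w0 ((k, p) :: pi0) ->
  k < length Theta /\ p + length (lk Theta k) <= length (wof Theta w0 pi0) /\
  length (wof Theta w0 ((k, p) :: pi0)) = p + length (rk Theta k) + (length (wof Theta w0 pi0) - p - length (lk Theta k)) /\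
  (forall i, i < length (lk Theta k) -> nth (p + i) (wof Theta w0 pi0) false = nth i (lk Theta k) false) /\
  (forall i, i < p -> nth i (wof Theta w0 ((k, p) :: pi0)) false = nth i (wof Theta w0 pi0) false) /\
  (forall j, j < length (rk Theta k) -> nth (p + j) (wof Theta w0 ((k, p) :: pi0)) false = nth j (rk Theta k) false) /\
  (forall j, j < length (wof Theta w0 pi0) - p - length (lk Theta k) ->
     nth (p + length (rk Theta k) + j) (wof Theta w0 ((k, p) :: pi0)) false =
     nth (p + length (lk Theta k) + j) (wof Theta w0 pi0) false).
Proof.
  intros Hv. apply valid_cons in Hv as [_ Hok].
  apply stepok_spec in Hok as [Hk [_ [Hle Hu]]].
  change (wof Theta w0 ((k, p) :: pi0)) with (apply_step Theta (k, p) (wof Theta w0 pi0)).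
  unfold apply_step. simpl fst; simpl snd.
  change (fst (rl Theta k)) with (lk Theta k) in *. change (snd (rl Theta k)) with (rk Theta k).
  generalize dependent (wof Theta w0 pi0). intros u Hle Hu.
  set (n := length (lk Theta k)) in *. set (m := length (rk Theta k)).
  assert (Hx : length (firstn p u) = p) by (apply firstn_len; lia).
  assert (Hy : length (skipn (p + n) u) = length u - p - n) by (rewrite length_skipn; lia).
  split; auto. split; auto. split; [rewrite !length_app; fold m; lia|].
  split; [|split; [|split]].
  - intros i Hi. rewrite Hu. rewrite nth_app3_2 by (rewrite Hx; fold n; lia). f_equal. lia.
  - intros i Hi. rewrite nth_app3_1 by lia. rewrite Hu at 2. rewrite nth_app3_1 by lia. auto.
  - intros j Hj. rewrite nth_app3_2 by (rewrite Hx; fold m; lia). f_equal. lia.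
  - intros j Hj. rewrite nth_app3_3 by (rewrite Hx; fold m; lia).
    pose proof (f_equal (fun w => nth (p + n + j) w false) Hu) as E. cbv beta in E. rewrite E.
    rewrite nth_app3_3 by (rewrite Hx; fold n; lia). f_equal. rewrite Hx. fold m n. lia.
Qed.

Inductive tkt : Type :=
| TR (k p : nat) (pi0 : list (nat * nat))
| TL (k p : nat) (pi0 : list (nat * nat)) (i : nat)
| TT (k p : nat) (pi0 : list (nat * nat)) (j : nat).

Definition ly Theta w0 k p pi0 := length (wof Theta w0 pi0) - p - length (lk Theta k).

Definition ss Theta w0 (t : tkt) : tgd :=
  match t with
  | TR k p pi0 => rule_tgd (lk Theta k, rk Theta k)
  | TL k p pi0 i => tgd_L (nth i (wof Theta w0 pi0) false)
  | TT k p pi0 j => tgd_R (nth (p + length (lk Theta k) + j) (wof Theta w0 pi0) false)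
  end.

Definition hh Theta (t : tkt) : nat -> term :=
  match t with
  | TR k p pi0 => fun z => if z <=? length (lk Theta k) then Nd pi0 (p + z)
                           else Nd ((k, p) :: pi0) (p + (z - S (length (lk Theta k))))
  | TL k p pi0 i => fun z => match z with
                     | 0 => Nd pi0 i | 1 => Nd pi0 (S i) | 2 => Nd ((k, p) :: pi0) (S i)
                     | _ => Nd ((k, p) :: pi0) i end
  | TT k p pi0 j => fun z => match z with
                     | 0 => Nd pi0 (p + length (lk Theta k) + j)
                     | 1 => Nd ((k, p) :: pi0) (p + length (rk Theta k) + j)
                     | 2 => Nd pi0 (S (p + length (lk Theta k) + j))
                     | _ => Nd ((k, p) :: pi0) (S (p + length (rk Theta k) + j)) end
  end.

Definition lv (Cc : nat) (t : tkt) : nat :=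
  match t with
  | TR k p pi0 => S (length pi0) * Cc
  | TL k p pi0 i => S (length pi0) * Cc + (p - i)
  | TT k p pi0 j => S (length pi0) * Cc + S j
  end.

Definition tks Theta w0 N : list tkt :=
  flat_map (fun pi => match pi with
    | [] => []
    | (k, p) :: pi0 => TR k p pi0 :: map (TL k p pi0) (seq 0 p) ++ map (TT k p pi0) (seq 0 (ly Theta w0 k p pi0))
    end) (Vall Theta w0 N).

Lemma tks_In Theta w0 N t : In t (tks Theta w0 N) <->
  match t with
  | TR k p pi0 => valid Theta w0 ((k, p) :: pi0) /\ S (length pi0) < N
  | TL k p pi0 i => valid Theta w0 ((k, p) :: pi0) /\ S (length pi0) < N /\ i < p
  | TT k p pi0 j => valid Theta w0 ((k, p) :: pi0) /\ S (length pi0) < N /\ j < ly Theta w0 k p pi0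
  end.
Proof.
  unfold tks. rewrite in_flat_map. split.
  - intros [pi [Hpi Ht]]. apply Vall_In in Hpi as [Hv Hl].
    destruct pi as [|[k p] pi0]; [destruct Ht|]. simpl in Hl.
    destruct Ht as [<-|Ht]; [split; auto|]. apply in_app_iff in Ht as [Ht|Ht];
    apply in_map_iff in Ht as [i [<- Hi]]; apply in_seq in Hi; repeat split; auto; lia.
  - destruct t as [k p pi0|k p pi0 i|k p pi0 j]; intros H; exists ((k, p) :: pi0);
    (split; [apply Vall_In; simpl; split; [apply H|lia]|]).
    + left; auto.
    + right. apply in_app_iff. left. apply in_map. apply in_seq. lia.
    + right. apply in_app_iff. right. apply in_map. apply in_seq. lia.
Qed.

Definition U0 w0 : instance := map (fun i => AE (Nd [] i) (Const (nth i w0 false)) (Nd [] (S i))) (seq 0 (length w0)).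

Definition EU Theta w0 pi a := AE (Nd pi a) (Const (nth a (wof Theta w0 pi) false)) (Nd pi (S a)).
Definition LU (k p : nat) (pi0 : list (nat * nat)) i := AL (Nd pi0 i) (Nd ((k, p) :: pi0) i).
Definition RU Theta k p pi0 j :=
  AR (Nd pi0 (p + length (lk Theta k) + j)) (Nd ((k, p) :: pi0) (p + length (rk Theta k) + j)).

Lemma in_cons_iff' {X} (a b : X) l : In a (b :: l) <-> b = a \/ In a l.
Proof. reflexivity. Qed.

Definition UL Theta w0 N Cc L := Ule (U0 w0) (tks Theta w0 N) (lv Cc) (ss Theta w0) (hh Theta) L.

Definition himg Theta w0 t := map (asub (hh Theta t)) (Defs.head (ss Theta w0 t)).

Lemma UL_ticket Theta w0 N Cc L t A : In t (tks Theta w0 N) -> lv Cc t <= L ->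
  In A (himg Theta w0 t) -> In A (UL Theta w0 N Cc L).
Proof.
  intros Ht Hl HA. unfold UL, Ule. apply in_app_iff. right. apply in_flat_map. exists t.
  split; auto. apply filter_In. split; auto. apply Nat.leb_le. auto.
Qed.

Lemma UL_mono Theta w0 N Cc L L' A : L <= L' -> In A (UL Theta w0 N Cc L) -> In A (UL Theta w0 N Cc L').
Proof.
  unfold UL, Ule. rewrite !in_app_iff. intros Hl [H|H]; auto. right.
  apply in_flat_map in H as [t [Ht HA]]. apply in_flat_map. exists t. split; auto.
  apply filter_In in Ht as [Ht Hle]. apply filter_In. split; auto. apply Nat.leb_le in Hle. apply Nat.leb_le. lia.
Qed.

Lemma UL_split Theta w0 N Cc L A : In A (UL Theta w0 N Cc L) ->
  In A (U0 w0) \/ exists t, In t (tks Theta w0 N) /\ lv Cc t <= L /\ In A (himg Theta w0 t).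
Proof.
  unfold UL, Ule. rewrite in_app_iff. intros [H|H]; auto. right.
  apply in_flat_map in H as [t [Ht HA]]. apply filter_In in Ht as [Ht Hle]. apply Nat.leb_le in Hle. eauto.
Qed.

Lemma hTR_lo Theta k p pi0 z : z <= length (lk Theta k) -> hh Theta (TR k p pi0) z = Nd pi0 (p + z).
Proof. intros H. simpl. destruct (Nat.leb_spec z (length (lk Theta k))); [auto|lia]. Qed.
Lemma hTR_hi Theta k p pi0 z : length (lk Theta k) < z ->
  hh Theta (TR k p pi0) z = Nd ((k, p) :: pi0) (p + (z - S (length (lk Theta k)))).
Proof. intros H. simpl. destruct (Nat.leb_spec z (length (lk Theta k))); [lia|auto]. Qed.

Lemma himg_TR Theta w0 k p pi0 A : In A (himg Theta w0 (TR k p pi0)) <->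
  A = LU k p pi0 p \/
  (exists j, j < length (rk Theta k) /\
     A = AE (Nd ((k, p) :: pi0) (p + j)) (Const (nth j (rk Theta k) false)) (Nd ((k, p) :: pi0) (S (p + j)))) \/
  A = RU Theta k p pi0 0.
Proof.
  unfold himg. change (ss Theta w0 (TR k p pi0)) with (rule_tgd (lk Theta k, rk Theta k)).
  rewrite rule_tgd_eq. unfold Defs.head, snd. rewrite map_cons, map_app, map_cons. change (map (asub (hh Theta (TR k p pi0))) []) with (@nil (atom term)).
  assert (E0 : asub (hh Theta (TR k p pi0)) (AL (VV 0) (VV (S (length (lk Theta k))))) = LU k p pi0 p).
  { unfold asub, amap, vsub. rewrite hTR_lo, hTR_hi by lia. unfold LU. f_equal; f_equal; lia. }
  assert (E1 : asub (hh Theta (TR k p pi0)) (AR (VV (length (lk Theta k)))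
                 (VV (S (length (lk Theta k)) + length (rk Theta k)))) = RU Theta k p pi0 0).
  { unfold asub, amap, vsub. rewrite hTR_lo, hTR_hi by lia. unfold RU. f_equal; f_equal; lia. }
  rewrite E0, E1. rewrite in_cons_iff', in_app_iff, in_cons_iff', in_map_iff. simpl In. split.
  - intros [<-|[[b [<- Hb]]|[<-|[]]]]; auto. right. left.
    apply path_atoms_In in Hb as [j [Hj ->]]. exists j. split; auto.
    unfold asub, amap, vsub. rewrite !hTR_hi by lia. f_equal; f_equal; lia.
  - intros [<-|[[j [Hj ->]]|<-]]; auto. right. left.
    exists (AE (VV (S (length (lk Theta k)) + j)) (VC (nth j (rk Theta k) false)) (VV (S (length (lk Theta k)) + S j))).
    split.
    + unfold asub, amap, vsub. rewrite !hTR_hi by lia. f_equal; f_equal; lia.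
    + apply path_atoms_In. eauto.
Qed.

Lemma himg_TL Theta w0 k p pi0 i A : In A (himg Theta w0 (TL k p pi0 i)) <->
  A = LU k p pi0 i \/
  A = AE (Nd ((k, p) :: pi0) i) (Const (nth i (wof Theta w0 pi0) false)) (Nd ((k, p) :: pi0) (S i)).
Proof. unfold himg, LU. simpl. intuition. Qed.

Lemma himg_TT Theta w0 k p pi0 j A : In A (himg Theta w0 (TT k p pi0 j)) <->
  A = AE (Nd ((k, p) :: pi0) (p + length (rk Theta k) + j))
         (Const (nth (p + length (lk Theta k) + j) (wof Theta w0 pi0) false))
         (Nd ((k, p) :: pi0) (S (p + length (rk Theta k) + j))) \/
  A = AR (Nd pi0 (S (p + length (lk Theta k) + j))) (Nd ((k, p) :: pi0) (S (p + length (rk Theta k) + j))).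
Proof. unfold himg. simpl. intuition. Qed.

Definition semU Theta w0 (A : atom term) : Prop :=
  (exists pi a, valid Theta w0 pi /\ a < length (wof Theta w0 pi) /\ A = EU Theta w0 pi a) \/
  (exists k p pi0 i, valid Theta w0 ((k, p) :: pi0) /\ i <= p /\ A = LU k p pi0 i) \/
  (exists k p pi0 j, valid Theta w0 ((k, p) :: pi0) /\ j <= ly Theta w0 k p pi0 /\ A = RU Theta k p pi0 j).

Lemma U0_In w0 A : In A (U0 w0) <-> exists i, i < length w0 /\ A = AE (Nd [] i) (Const (nth i w0 false)) (Nd [] (S i)).
Proof.
  unfold U0. rewrite in_map_iff. split.
  - intros [i [<- Hi]]. apply in_seq in Hi. exists i. split; auto. lia.
  - intros [i [Hi ->]]. exists i. split; auto. apply in_seq. lia.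
Qed.

Lemma U_sound Theta w0 N Cc L A : In A (UL Theta w0 N Cc L) -> semU Theta w0 A.
Proof.
  intros H. apply UL_split in H as [H|[t [Ht [_ HA]]]].
  - apply U0_In in H as [i [Hi ->]]. left. exists [], i. split; [reflexivity|]. split; auto.
  - apply tks_In in Ht. destruct t as [k p pi0|k p pi0 i|k p pi0 j].
    + destruct Ht as [Hv _]. pose proof (child_facts _ _ _ _ _ Hv) as [Hk [Hle [Hlen [Hl [Hx [Hr Hy]]]]]].
      apply himg_TR in HA as [->|[[j [Hj ->]]| ->]].
      * right. left. exists k, p, pi0, p. auto.
      * left. exists ((k, p) :: pi0), (p + j). split; auto. split; [lia|].
        unfold EU. rewrite Hr; auto.
      * right. right. exists k, p, pi0, 0. split; auto. split; [lia|auto].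
    + destruct Ht as [Hv [_ Hi]]. pose proof (child_facts _ _ _ _ _ Hv) as [Hk [Hle [Hlen [Hl [Hx [Hr Hy]]]]]].
      apply himg_TL in HA as [->| ->].
      * right. left. exists k, p, pi0, i. split; auto. split; [lia|auto].
      * left. exists ((k, p) :: pi0), i. split; auto. split; [lia|]. unfold EU. rewrite Hx; auto.
    + destruct Ht as [Hv [_ Hj]]. pose proof (child_facts _ _ _ _ _ Hv) as [Hk [Hle [Hlen [Hl [Hx [Hr Hy]]]]]].
      unfold ly in Hj. apply himg_TT in HA as [->| ->].
      * left. exists ((k, p) :: pi0), (p + length (rk Theta k) + j). split; auto. split; [lia|].
        unfold EU. rewrite Hy; auto.
      * right. right. exists k, p, pi0, (S j). split; auto. split; [unfold ly; lia|].
        unfold RU. f_equal; f_equal; lia.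
Qed.

Lemma complete_L Theta w0 N Cc k p pi0 i : ~ der Theta w0 N -> valid Theta w0 ((k, p) :: pi0) -> i <= p ->
  In (LU k p pi0 i) (UL Theta w0 N Cc (S (length pi0) * Cc + (p - i))).
Proof.
  intros HN Hv Hi. pose proof (valid_bound _ _ _ _ HN Hv) as HlN. simpl in HlN.
  destruct (Nat.eq_dec i p) as [->|Hne].
  - apply UL_ticket with (TR k p pi0).
    + apply tks_In. auto.
    + simpl. lia.
    + apply himg_TR. auto.
  - apply UL_ticket with (TL k p pi0 i).
    + apply tks_In. repeat split; auto; lia.
    + simpl. lia.
    + apply himg_TL. auto.
Qed.

Lemma complete_R Theta w0 N Cc k p pi0 j : ~ der Theta w0 N -> valid Theta w0 ((k, p) :: pi0) ->
  j <= ly Theta w0 k p pi0 ->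
  In (RU Theta k p pi0 j) (UL Theta w0 N Cc (S (length pi0) * Cc + j)).
Proof.
  intros HN Hv Hj. pose proof (valid_bound _ _ _ _ HN Hv) as HlN. simpl in HlN.
  destruct j as [|j].
  - apply UL_ticket with (TR k p pi0).
    + apply tks_In. auto.
    + simpl. lia.
    + apply himg_TR. auto.
  - apply UL_ticket with (TT k p pi0 j).
    + apply tks_In. repeat split; auto; lia.
    + simpl. lia.
    + apply himg_TT. right. unfold RU. f_equal; f_equal; lia.
Qed.

Lemma complete_E Theta w0 N Cc B pi a : ~ der Theta w0 N ->
  (forall pi, valid Theta w0 pi -> length (wof Theta w0 pi) <= B) ->
  valid Theta w0 pi -> a < length (wof Theta w0 pi) ->
  In (EU Theta w0 pi a) (UL Theta w0 N Cc (length pi * Cc + B)).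
Proof.
  intros HN HB Hv Ha. destruct pi as [|[k p] pi0].
  - unfold UL, Ule. apply in_app_iff. left. apply U0_In. exists a. split; auto.
  - pose proof (valid_bound _ _ _ _ HN Hv) as HlN. simpl in HlN.
    pose proof (child_facts _ _ _ _ _ Hv) as [Hk [Hle [Hlen [Hl [Hx [Hr Hy]]]]]].
    assert (Hv0 : valid Theta w0 pi0) by (apply valid_cons in Hv; tauto).
    pose proof (HB _ Hv0) as HB0. simpl length.
    destruct (Nat.lt_ge_cases a p) as [H1|H1].
    + apply UL_ticket with (TL k p pi0 a).
      * apply tks_In. auto.
      * simpl. lia.
      * apply himg_TL. right. unfold EU. rewrite Hx; auto.
    + destruct (Nat.lt_ge_cases a (p + length (rk Theta k))) as [H2|H2].
      * apply UL_ticket with (TR k p pi0).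
        -- apply tks_In. auto.
        -- simpl. lia.
        -- apply himg_TR. right. left. exists (a - p). split; [lia|].
           unfold EU. replace (p + (a - p)) with a by lia. rewrite <- Hr by lia.
           replace (p + (a - p)) with a by lia. reflexivity.
      * apply UL_ticket with (TT k p pi0 (a - p - length (rk Theta k))).
        -- apply tks_In. repeat split; auto; unfold ly; lia.
        -- simpl. lia.
        -- apply himg_TT. left. unfold EU.
           replace (p + length (rk Theta k) + (a - p - length (rk Theta k))) with a by lia.
           rewrite <- Hy by lia.
           replace (p + length (rk Theta k) + (a - p - length (rk Theta k))) with a by lia. reflexivity.
Qed.


Lemma lv_bound Theta w0 N Cc B t : ~ der Theta w0 N ->
  (forall pi, valid Theta w0 pi -> length (wof Theta w0 pi) <= B) -> B < Cc ->
  In t (tks Theta w0 N) -> lv Cc t <= N * Cc.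
Proof.
  intros HN HB HC Ht. apply tks_In in Ht.
  destruct t as [k p pi0|k p pi0 i|k p pi0 j]; simpl;
  repeat match goal with H : _ /\ _ |- _ => destruct H end;
  match goal with H : valid _ _ _ |- _ =>
    pose proof (child_facts _ _ _ _ _ H) as [_ [Hle _]];
    assert (Hv0 : valid Theta w0 pi0) by (apply valid_cons in H; tauto) end;
  pose proof (HB _ Hv0); try unfold ly in *; nia.
Qed.

Lemma sat_by_ticket Theta w0 N Cc L t s h : In t (tks Theta w0 N) -> lv Cc t <= L -> s = ss Theta w0 t ->
  agree_on (body_vars s) h (hh Theta t) ->
  exists h', agree_on (body_vars s) h h' /\ forall a, In a (Defs.head s) -> In (asub h' a) (UL Theta w0 N Cc L).
Proof.
  intros Ht Hl -> Hag. exists (hh Theta t). split; auto. intros a Ha.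
  apply UL_ticket with t; auto. unfold himg. apply in_map. auto.
Qed.

Lemma semU_E Theta w0 t1 c t3 : semU Theta w0 (AE t1 c t3) ->
  exists pi a, valid Theta w0 pi /\ a < length (wof Theta w0 pi) /\
   t1 = Nd pi a /\ c = Const (nth a (wof Theta w0 pi) false) /\ t3 = Nd pi (S a).
Proof.
  intros [[pi [a [Hv [Ha E]]]]|[[k [p [pi0 [i [_ [_ E]]]]]]|[k [p [pi0 [j [_ [_ E]]]]]]]]; try discriminate.
  unfold EU in E. injection E as -> -> ->. exists pi, a. auto.
Qed.

Lemma semU_L Theta w0 t1 t2 : semU Theta w0 (AL t1 t2) ->
  exists k p pi0 i, valid Theta w0 ((k, p) :: pi0) /\ i <= p /\ t1 = Nd pi0 i /\ t2 = Nd ((k, p) :: pi0) i.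
Proof.
  intros [[pi [a [Hv [Ha E]]]]|[[k [p [pi0 [i [Hv [Hi E]]]]]]|[k [p [pi0 [j [_ [_ E]]]]]]]]; try discriminate.
  unfold LU in E. injection E as -> ->. exists k, p, pi0, i. auto.
Qed.

Lemma semU_R Theta w0 t1 t2 : semU Theta w0 (AR t1 t2) ->
  exists k p pi0 j, valid Theta w0 ((k, p) :: pi0) /\ j <= ly Theta w0 k p pi0 /\
    t1 = Nd pi0 (p + length (lk Theta k) + j) /\ t2 = Nd ((k, p) :: pi0) (p + length (rk Theta k) + j).
Proof.
  intros [[pi [a [Hv [Ha E]]]]|[[k [p [pi0 [i [_ [_ E]]]]]]|[k [p [pi0 [j [Hv [Hj E]]]]]]]]; try discriminate.
  unfold RU in E. injection E as -> ->. exists k, p, pi0, j. auto.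
Qed.

Lemma U_model Theta w0 N Cc B : (forall l r, In (l, r) Theta -> l <> nil) -> ~ der Theta w0 N ->
  (forall pi, valid Theta w0 pi -> length (wof Theta w0 pi) <= B) -> B < Cc ->
  model (Sigma_R Theta) (UL Theta w0 N Cc (N * Cc)).
Proof.
  intros Hl HN HB HC s h [Hs Hb].
  assert (Hsem : forall a, In a (body s) -> semU Theta w0 (asub h a)).
  { intros a Ha. eapply U_sound. apply Hb. auto. }
  apply Sigma_R_In in Hs as [[l [r [Hin ->]]]|[[c ->]|[c ->]]].
  - apply In_nth with (d := ([], [])) in Hin as [k [Hk Ek]].
    assert (Erl : rl Theta k = (l, r)) by exact Ek.
    assert (Elk : lk Theta k = l) by (unfold lk; rewrite Erl; auto).
    assert (Erk : rk Theta k = r) by (unfold rk; rewrite Erl; auto).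
    assert (Hin0 : In (l, r) Theta) by (rewrite <- Ek; apply nth_In; auto).
    assert (Hl0 : l <> []) by exact (Hl l r Hin0).
    assert (HE : forall j, j < length l -> semU Theta w0 (AE (h j) (Const (nth j l false)) (h (S j)))).
    { intros j Hj. apply (Hsem (AE (VV j) (VC (nth j l false)) (VV (S j)))).
      rewrite rule_tgd_eq. apply path_atoms_In. exists j. auto. }
    destruct (semU_E _ _ _ _ _ (HE 0 ltac:(destruct l; [congruence|simpl; lia])))
      as [pi [p [Hv [Hp [E0 _]]]]].
    assert (Hch : forall j, j < length l -> h j = Nd pi (p + j) ->
       nth (p + j) (wof Theta w0 pi) false = nth j l false /\ p + j < length (wof Theta w0 pi) /\
       h (S j) = Nd pi (p + S j)).
    { intros j Hj Ehj. destruct (semU_E _ _ _ _ _ (HE j Hj)) as [pi' [a [_ [Ha [E1 [E2 E3]]]]]].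
      rewrite Ehj in E1. apply Nd_inj in E1 as [<- <-]. injection E2 as E2.
      split; auto. split; auto. rewrite E3. f_equal. lia. }
    assert (Hall : forall j, j <= length l -> h j = Nd pi (p + j)).
    { induction j as [|j IH]; intros Hj.
      - rewrite E0. f_equal. lia.
      - destruct (Hch j) as [_ [_ H3]]; [lia | apply IH; lia | exact H3]. }
    assert (Hok : stepok Theta (k, p) (wof Theta w0 pi) = true).
    { apply stepok_of_nth; auto; change (fst (rl Theta k)) with (lk Theta k); rewrite Elk.
      - assert (Hlpos : 1 <= length l) by (destruct l; [congruence|simpl; lia]).
        destruct (Hch (length l - 1)) as [_ [H2 _]]; [lia | apply Hall; lia | lia].
      - intros i Hi. apply Hch; auto. apply Hall. lia. }
    assert (Hvc : valid Theta w0 ((k, p) :: pi)) by (apply valid_cons; auto).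
    apply sat_by_ticket with (TR k p pi).
    + apply tks_In. split; auto. pose proof (valid_bound _ _ _ _ HN Hvc). simpl in *. lia.
    + apply (lv_bound Theta w0 N Cc B); auto. apply tks_In. split; auto.
      pose proof (valid_bound _ _ _ _ HN Hvc). simpl in *. lia.
    + simpl. rewrite Elk, Erk. auto.
    + intros z Hz. rewrite rule_body_vars, path_vars in Hz. rewrite hTR_lo by (rewrite Elk; lia).
      apply Hall. lia.
  - destruct (semU_E _ _ _ _ _ (Hsem (AE (VV 0) (VC c) (VV 1)) ltac:(simpl; tauto)))
      as [pi [a [Hv [Ha [E0 [Ec E1]]]]]].
    destruct (semU_L _ _ _ _ (Hsem (AL (VV 1) (VV 2)) ltac:(simpl; tauto)))
      as [k [p [pi0 [i [Hvc [Hi [E1' E2]]]]]]].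
    simpl in E0, E1, E1', E2. rewrite E1 in E1'. apply Nd_inj in E1' as [<- <-].
    injection Ec as Ec. subst c.
    apply sat_by_ticket with (TL k p pi a).
    + apply tks_In. pose proof (valid_bound _ _ _ _ HN Hvc). simpl in *. repeat split; auto; lia.
    + apply (lv_bound Theta w0 N Cc B); auto. apply tks_In.
      pose proof (valid_bound _ _ _ _ HN Hvc). simpl in *. repeat split; auto; lia.
    + reflexivity.
    + intros z Hz. simpl in Hz. simpl. destruct Hz as [<-|[<-|[<-|[<-|[]]]]]; auto.
  - destruct (semU_R _ _ _ _ (Hsem (AR (VV 0) (VV 1)) ltac:(simpl; tauto)))
      as [k [p [pi0 [j [Hvc [Hj [E0 E1]]]]]]].
    destruct (semU_E _ _ _ _ _ (Hsem (AE (VV 0) (VC c) (VV 2)) ltac:(simpl; tauto)))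
      as [pi [a [Hv [Ha [E0' [Ec E2]]]]]].
    simpl in E0, E1, E0', E2. rewrite E0 in E0'. apply Nd_inj in E0' as [<- <-].
    injection Ec as Ec. subst c.
    pose proof (child_facts _ _ _ _ _ Hvc) as [_ [Hle _]].
    apply sat_by_ticket with (TT k p pi0 j).
    + apply tks_In. pose proof (valid_bound _ _ _ _ HN Hvc). simpl in *. unfold ly. repeat split; auto; lia.
    + apply (lv_bound Theta w0 N Cc B); auto. apply tks_In.
      pose proof (valid_bound _ _ _ _ HN Hvc). simpl in *. unfold ly. repeat split; auto; lia.
    + reflexivity.
    + intros z Hz. simpl in Hz. simpl. destruct Hz as [<-|[<-|[<-|[<-|[]]]]]; auto.
Qed.


Definition ment Theta (t : tkt) (pi : list (nat * nat)) (q : nat) : Prop :=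
  match t with
  | TR k p pi0 => pi = pi0 \/ (pi = (k, p) :: pi0 /\ p <= q <= p + length (rk Theta k))
  | TL k p pi0 i => pi = pi0 \/ (pi = (k, p) :: pi0 /\ (q = i \/ q = S i))
  | TT k p pi0 j => pi = pi0 \/ (pi = (k, p) :: pi0 /\
                     (q = p + length (rk Theta k) + j \/ q = S (p + length (rk Theta k) + j)))
  end.

Ltac ndinj := repeat match goal with
  | H : Nd _ _ = Nd _ _ |- _ => apply Nd_inj in H as [? ?]
  | H : Const _ = Nd _ _ |- _ => unfold Nd in H; discriminate H
  | H : Nd _ _ = Const _ |- _ => unfold Nd in H; discriminate H
  | H : False |- _ => destruct H
  | H : _ \/ _ |- _ => destruct H
  end; subst.

Lemma occurs_UL Theta w0 N Cc L pi q : occurs (Nd pi q) (UL Theta w0 N Cc L) ->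
  pi = [] \/ exists t, In t (tks Theta w0 N) /\ lv Cc t <= L /\ ment Theta t pi q.
Proof.
  intros [A [HA Hq]]. apply UL_split in HA as [HA|[t [Ht [Hl HA]]]].
  - apply U0_In in HA as [i [Hi ->]]. simpl in Hq. left. ndinj; auto.
  - right. exists t. split; auto. split; auto. destruct t as [k p pi0|k p pi0 i|k p pi0 j]; simpl.
    + apply himg_TR in HA as [->|[[j [Hj ->]]| ->]]; unfold LU, RU in *; simpl in Hq; ndinj; auto;
      right; split; auto; lia.
    + apply himg_TL in HA as [->| ->]; unfold LU in *; simpl in Hq; ndinj; auto.
    + apply himg_TT in HA as [->| ->]; simpl in Hq; ndinj; auto.
Qed.

Lemma evar_TR l r x : l <> [] -> is_evar (rule_tgd (l, r)) x -> S (length l) <= x <= S (length l) + length r.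
Proof.
  intros Hl [Hh Hb]. rewrite rule_body_vars, path_vars in Hb.
  assert (length l < x) by (destruct (Nat.lt_ge_cases (length l) x); auto; exfalso; apply Hb; split; auto; lia).
  rewrite rule_tgd_eq in Hh. unfold Defs.head, snd in Hh.
  rewrite atoms_vars_cons, atoms_vars_app, !in_app_iff in Hh. simpl in Hh.
  destruct Hh as [[E|[E|[]]]|[Hh|[E|[E|[]]]]]; subst; try lia.
  apply path_vars in Hh. lia.
Qed.

Lemma evar_L c x : is_evar (tgd_L c) x -> x = 3.
Proof. intros [Hh Hb]. simpl in *. intuition. Qed.
Lemma evar_R c x : is_evar (tgd_R c) x -> x = 3.
Proof. intros [Hh Hb]. simpl in *. intuition. Qed.

Definition tpar (t : tkt) := match t with TR _ _ pi0 | TL _ _ pi0 _ | TT _ _ pi0 _ => pi0 end.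

Lemma lv_range Theta w0 N Cc B t : ~ der Theta w0 N ->
  (forall pi, valid Theta w0 pi -> length (wof Theta w0 pi) <= B) ->
  In t (tks Theta w0 N) ->
  S (length (tpar t)) * Cc <= lv Cc t <= S (length (tpar t)) * Cc + B.
Proof.
  intros HN HB Ht. apply tks_In in Ht.
  destruct t as [k p pi0|k p pi0 i|k p pi0 j]; simpl;
  repeat match goal with H : _ /\ _ |- _ => destruct H end;
  match goal with H : valid _ _ _ |- _ =>
    pose proof (child_facts _ _ _ _ _ H) as [_ [Hle _]];
    assert (Hv0 : valid Theta w0 pi0) by (apply valid_cons in H; tauto) end;
  pose proof (HB _ Hv0); try unfold ly in *; lia.
Qed.

Lemma rl_in Theta k : k < length Theta -> In (lk Theta k, rk Theta k) Theta.
Proof. intros Hk. unfold lk, rk. rewrite <- surjective_pairing. apply nth_In. auto. Qed.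

Lemma tickets_body Theta w0 N Cc B : (forall l r, In (l, r) Theta -> l <> nil) -> ~ der Theta w0 N ->
  (forall pi, valid Theta w0 pi -> length (wof Theta w0 pi) <= B) -> B < Cc ->
  forall t, In t (tks Theta w0 N) -> In (ss Theta w0 t) (Sigma_R Theta) /\ 1 <= lv Cc t /\
    forall a, In a (body (ss Theta w0 t)) -> In (asub (hh Theta t) a) (UL Theta w0 N Cc (pred (lv Cc t))).
Proof.
  intros Hl HN HB HC t Ht. pose proof (lv_range Theta w0 N Cc B t HN HB Ht) as Hlv.
  apply tks_In in Ht. destruct t as [k p pi0|k p pi0 i|k p pi0 j].
  - destruct Ht as [Hv HlN].
    pose proof (child_facts _ _ _ _ _ Hv) as [Hk [Hle [Hlen [Hlf [Hx [Hr Hy]]]]]].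
    assert (Hv0 : valid Theta w0 pi0) by (apply valid_cons in Hv; tauto).
    pose proof (HB _ Hv0) as HB0.
    split; [simpl; apply rule_in_Sigma; apply rl_in; auto|]. split; [simpl in *; lia|].
    intros a Ha. change (ss Theta w0 (TR k p pi0)) with (rule_tgd (lk Theta k, rk Theta k)) in Ha.
    rewrite rule_tgd_eq in Ha. unfold body, fst in Ha. apply path_atoms_In in Ha as [i [Hi ->]].
    replace (asub (hh Theta (TR k p pi0)) (AE (VV (0 + i)) (VC (nth i (lk Theta k) false)) (VV (0 + S i))))
      with (EU Theta w0 pi0 (p + i)).
    + apply UL_mono with (length pi0 * Cc + B).
      * simpl in Hlv. simpl. lia.
      * apply complete_E; auto. lia.
    + unfold asub, amap, vsub. rewrite !hTR_lo by lia. unfold EU. rewrite Hlf by auto.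
      f_equal; f_equal; lia.
  - destruct Ht as [Hv [HlN Hi]].
    pose proof (child_facts _ _ _ _ _ Hv) as [Hk [Hle [Hlen [Hlf [Hx [Hr Hy]]]]]].
    assert (Hv0 : valid Theta w0 pi0) by (apply valid_cons in Hv; tauto).
    pose proof (HB _ Hv0) as HB0.
    split; [apply L_in_Sigma|]. split; [simpl in *; lia|].
    intros a Ha. simpl in Ha. destruct Ha as [<-|[<-|[]]].
    + change (asub (hh Theta (TL k p pi0 i)) (AE (VV 0) (VC (nth i (wof Theta w0 pi0) false)) (VV 1)))
        with (EU Theta w0 pi0 i).
      apply UL_mono with (length pi0 * Cc + B).
      * simpl in Hlv. simpl. lia.
      * apply complete_E; auto. lia.
    + change (asub (hh Theta (TL k p pi0 i)) (AL (VV 1) (VV 2))) with (LU k p pi0 (S i)).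
      apply UL_mono with (S (length pi0) * Cc + (p - S i)).
      * simpl. lia.
      * apply complete_L; auto.
  - destruct Ht as [Hv [HlN Hj]].
    pose proof (child_facts _ _ _ _ _ Hv) as [Hk [Hle [Hlen [Hlf [Hx [Hr Hy]]]]]].
    assert (Hv0 : valid Theta w0 pi0) by (apply valid_cons in Hv; tauto).
    pose proof (HB _ Hv0) as HB0. unfold ly in Hj.
    split; [apply R_in_Sigma|]. split; [simpl in *; lia|].
    intros a Ha. simpl in Ha. destruct Ha as [<-|[<-|[]]].
    + change (asub (hh Theta (TT k p pi0 j)) (AR (VV 0) (VV 1))) with (RU Theta k p pi0 j).
      apply UL_mono with (S (length pi0) * Cc + j).
      * simpl. lia.
      * apply complete_R; auto. unfold ly. lia.
    + change (asub (hh Theta (TT k p pi0 j)) (AE (VV 0) (VC (nth (p + length (lk Theta k) + j) (wof Theta w0 pi0) false)) (VV 2)))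
        with (EU Theta w0 pi0 (p + length (lk Theta k) + j)).
      apply UL_mono with (length pi0 * Cc + B).
      * simpl in Hlv. simpl. lia.
      * apply complete_E; auto. lia.
Qed.

Definition tchild (t : tkt) := match t with TR k p pi0 | TL k p pi0 _ | TT k p pi0 _ => (k, p) :: pi0 end.

Definition qcond Theta (t : tkt) (x q : nat) : Prop :=
  match t with
  | TR k p pi0 => S (length (lk Theta k)) <= x <= S (length (lk Theta k)) + length (rk Theta k) /\
                  q = p + (x - S (length (lk Theta k)))
  | TL k p pi0 i => x = 3 /\ q = i
  | TT k p pi0 j => x = 3 /\ q = S (p + length (rk Theta k) + j)
  end.

Lemma evar_node Theta w0 N t x : (forall l r, In (l, r) Theta -> l <> nil) ->
  In t (tks Theta w0 N) -> is_evar (ss Theta w0 t) x ->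
  exists q, hh Theta t x = Nd (tchild t) q /\ qcond Theta t x q.
Proof.
  intros Hl Ht Hx. apply tks_In in Ht. destruct t as [k p pi0|k p pi0 i|k p pi0 j].
  - destruct Ht as [Hv _]. pose proof (child_facts _ _ _ _ _ Hv) as [Hk _].
    apply evar_TR in Hx; [|apply (Hl _ (rk Theta k)); apply rl_in; auto].
    exists (p + (x - S (length (lk Theta k)))). split; [|simpl; auto].
    apply hTR_hi. lia.
  - apply evar_L in Hx. subst. eexists. split; [reflexivity|]. simpl. auto.
  - apply evar_R in Hx. subst. eexists. split; [reflexivity|]. simpl. auto.
Qed.

Lemma tickets_fresh Theta w0 N Cc B : (forall l r, In (l, r) Theta -> l <> nil) -> ~ der Theta w0 N ->
  (forall pi, valid Theta w0 pi -> length (wof Theta w0 pi) <= B) -> B < Cc ->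
  forall t x, In t (tks Theta w0 N) -> is_evar (ss Theta w0 t) x ->
  (exists n, hh Theta t x = Null n) /\ ~ occurs (hh Theta t x) (UL Theta w0 N Cc (pred (lv Cc t))).
Proof.
  intros Hl HN HB HC t x Ht Hx.
  destruct (evar_node Theta w0 N t x Hl Ht Hx) as [q [Eq Hq]]. rewrite Eq.
  split; [unfold Nd; eauto|]. intros Ho.
  pose proof (lv_range Theta w0 N Cc B t HN HB Ht) as Hlv.
  apply occurs_UL in Ho as [E|[t' [Ht' [Hl' Hm]]]].
  { destruct t; discriminate. }
  pose proof (lv_range Theta w0 N Cc B t' HN HB Ht') as Hlv'.
  pose proof Ht as Ht0. pose proof Ht' as Ht0'.
  apply tks_In in Ht0, Ht0'.
  destruct t' as [k' p' pi0'|k' p' pi0' i'|k' p' pi0' j']; simpl in Hm, Hlv', Hl';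
  (destruct Hm as [Em|[Em Hm]];
   [ exfalso; assert (Elen : length pi0' = S (length (tpar t)))
       by (rewrite <- Em; destruct t; reflexivity); rewrite Elen in Hlv'; lia
   | ]);
  destruct t as [k p pi0|k p pi0 i|k p pi0 j]; simpl in Em; injection Em as <- <- <-;
  simpl in Hq, Hlv, Hl', Hlv'; simpl; unfold ly in *;
  repeat match goal with H : _ /\ _ |- _ => destruct H end; try lia.
Qed.


Lemma tickets_uniq Theta w0 N t t' x y : (forall l r, In (l, r) Theta -> l <> nil) ->
  In t (tks Theta w0 N) -> In t' (tks Theta w0 N) ->
  is_evar (ss Theta w0 t) x -> is_evar (ss Theta w0 t') y -> hh Theta t x = hh Theta t' y ->
  t = t' /\ x = y.
Proof.
  intros Hl Ht Ht' Hx Hy E.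
  destruct (evar_node Theta w0 N t x Hl Ht Hx) as [q [Eq Hq]].
  destruct (evar_node Theta w0 N t' y Hl Ht' Hy) as [q' [Eq' Hq']].
  rewrite Eq, Eq' in E. apply Nd_inj in E as [Ec <-].
  apply tks_In in Ht, Ht'.
  destruct t as [k p pi0|k p pi0 i|k p pi0 j]; destruct t' as [k' p' pi0'|k' p' pi0' i'|k' p' pi0' j'];
  simpl in Ec; injection Ec as <- <- <-; simpl in Hq, Hq'; unfold ly in *;
  repeat match goal with H : _ /\ _ |- _ => destruct H end; subst;
  try (exfalso; lia); split; auto; try f_equal; lia.
Qed.


Lemma I_word_from_In k w A : In A (I_word_from k w) ->
  exists i, i < length w /\ A = AE (Null (k + i)) (Const (nth i w false)) (Null (k + S i)).
Proof.
  revert k. induction w as [|b w IH]; intros k HA; simpl in HA; [tauto|].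
  destruct HA as [<-|HA].
  - exists 0. simpl. split; [lia|]. f_equal; f_equal; lia.
  - destruct (IH (S k) HA) as [i [Hi ->]]. exists (S i). simpl. split; [lia|]. f_equal; f_equal; lia.
Qed.

Lemma dir1 Theta w0 : (forall l r, In (l, r) Theta -> l <> nil) ->
  core_chase_infinite (Sigma_R Theta) (I_word w0) -> infinite_derivation Theta w0.
Proof.
  intros Hl [f [Hf0 Hst]]. apply NNPP. intros Hni.
  destruct (konig Theta w0 Hni) as [N HN].
  set (B := list_max (map (fun pi => length (wof Theta w0 pi)) (Vall Theta w0 N))).
  assert (HB : forall pi, valid Theta w0 pi -> length (wof Theta w0 pi) <= B).
  { intros pi Hv. apply in_list_max. apply (in_map (fun pi => length (wof Theta w0 pi))). apply Vall_In. split; auto.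
    apply valid_bound with (Theta := Theta) (w0 := w0); auto. }
  set (Cc := S B). assert (HC : B < Cc) by (unfold Cc; lia).
  assert (Hok : tk_ok (Sigma_R Theta) (U0 w0) (tks Theta w0 N) (lv Cc) (ss Theta w0) (hh Theta)).
  { split; [|split].
    - intros t Ht. exact (tickets_body Theta w0 N Cc B Hl HN HB HC t Ht).
    - intros t x Ht Hx. exact (tickets_fresh Theta w0 N Cc B Hl HN HB HC t x Ht Hx).
    - intros t t' x y Ht Ht' Hx Hy E. eapply tickets_uniq; eauto. }
  set (c0 := fun t => match t with Null n => Null (snd (Cantor.of_nat n)) | Const b => Const b end).
  assert (Hc0 : hom_into c0 (U0 w0) (f 0)).
  { split; [reflexivity|]. intros A HA. apply U0_In in HA as [i [Hi ->]]. rewrite Hf0.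
    change (In (AE (Null (snd (Cantor.of_nat (Cantor.to_nat (0, i))))) (Const (nth i w0 false)) (Null (snd (Cantor.of_nat (Cantor.to_nat (0, S i)))))) (I_word w0)).
    rewrite !cancel_of_to. simpl.
    apply (I_word_from_path 0 w0 i Hi). }
  destruct (chase_up _ _ _ _ _ _ f c0 Hok Hst Hc0 (N * Cc)) as [g Hg].
  pose proof (U_model Theta w0 N Cc B Hl HN HB HC) as HM.
  set (a0 := fun t => match t with Null i => Nd [] i | Const b => Const b end).
  assert (Ha0 : hom_into a0 (f 0) (UL Theta w0 N Cc (N * Cc))).
  { split; [reflexivity|]. intros A HA. rewrite Hf0 in HA. apply I_word_from_In in HA as [i [Hi ->]].
    unfold UL, Ule. apply in_app_iff. left. apply U0_In. exists i. split; auto. }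
  exact (no_univ _ f _ a0 (N * Cc) g HM Ha0 Hst Hg).
Qed.

Theorem theorem8 (Theta : rws)
  (Hlhs : forall l r, In (l, r) Theta -> l <> nil)
  (w0 : word) :
  core_chase_infinite (Sigma_R Theta) (I_word w0) <-> infinite_derivation Theta w0.
Proof.
  split.
  - apply dir1; auto.
  - apply dir2; auto.
Qed.
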